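(* Let $K$ be an origin-symmetric convex body in $\mathbb{R}^2$ and let $\mu$ be a B-measure on $\partial K$. Then $\operatorname{supp}(\mu)\subseteq A(K)\setminus E(K)$.
   Context: For an origin-symmetric convex body $K\subset\mathbb{R}^2$ (compact convex set with non-empty interior, $K=-K$), let $\|x\|_K=\min\{\lambda>0: x\in\lambda K\}$ be the associated norm. For non-zero $x,y\in\mathbb{R}^2$, $x$ is Birkhoff orthogonal to $y$, written $x\dashv y$, if $\|x\|_K\le\|x+ty\|_K$ for all $t\in\mathbb{R}$. An angular measure on $\partial K$ is a Borel measure $\mu$ on $\partial K$ with $\mu(\partial K)=2\pi$, $\mu(X)=\mu(-X)$ for every Borel $X\subseteq\partial K$, and $\mu(\{x\})=0$ for every $x\in\partial K$. A B-measure is an angular measure $\mu$ such that $\mu(C)=\pi/2$ for every closed arc $C$ of $\partial K$ that contains no pair of opposite points $z,-z$ and whose endpoints $x,y$ satisfy $x\dashv y$. A point $x\in\partial K$ is an Auerbach point if there is $y\in\partial K$ with $x\dashv y$ and $y\dashv x$; $A(K)$ denotes the set of Auerbach points. $E(K)$ denotes the union of all relatively open non-degenerate line segments contained in $\partial K$. The support $\operatorname{supp}(\mu)$ is the set of all $x\in\partial K$ such that every relatively open subset of $\partial K$ containing $x$ has positive $\mu$-measure. *)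

(* Defs.v *)
From Stdlib Require Import Reals.
Open Scope R_scope.

Definition pt := (R * R)%type.
Definition pset := pt -> Prop.

Definition padd (x y : pt) : pt := (fst x + fst y, snd x + snd y).
Definition pscale (l : R) (x : pt) : pt := (l * fst x, l * snd x).
Definition popp (x : pt) : pt := (- fst x, - snd x).
Definition pzero : pt := (0, 0).

Definition pdist (x y : pt) : R :=
  sqrt ((fst x - fst y)^2 + (snd x - snd y)^2).

Definition is_open (O : pset) : Prop :=
  forall z, O z -> exists r, 0 < r /\ forall w, pdist w z < r -> O w.
Definition is_closed (A : pset) : Prop := is_open (fun z => ~ A z).
Definition is_bounded (A : pset) : Prop :=
  exists M, forall z, A z -> pdist z pzero <= M.
Definition interior (A : pset) (x : pt) : Prop :=
  exists r, 0 < r /\ forall w, pdist w x < r -> A w.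
Definition closure (A : pset) (x : pt) : Prop :=
  forall r, 0 < r -> exists w, A w /\ pdist w x < r.
Definition boundary (A : pset) (x : pt) : Prop := closure A x /\ ~ interior A x.

Definition convex (A : pset) : Prop :=
  forall x y s, A x -> A y -> 0 <= s <= 1 ->
    A (padd (pscale (1 - s) x) (pscale s y)).

Definition sym_convex_body (K : pset) : Prop :=
  is_closed K /\ is_bounded K /\ convex K /\ (exists x, interior K x) /\
  (forall x, K x -> K (popp x)).

Definition is_glb (E : R -> Prop) (m : R) : Prop :=
  (forall l, E l -> m <= l) /\ (forall b, (forall l, E l -> b <= l) -> b <= m).
Definition gauge (K : pset) (x : pt) (r : R) : Prop :=
  is_glb (fun l => 0 < l /\ exists y, K y /\ x = pscale l y) r.

Definition birkhoff (K : pset) (x y : pt) : Prop :=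
  x <> pzero /\ y <> pzero /\
  forall t r s, gauge K x r -> gauge K (padd x (pscale t y)) s -> r <= s.

Inductive borel : pset -> Prop :=
| borel_open O : is_open O -> borel O
| borel_compl A : borel A -> borel (fun z => ~ A z)
| borel_union (A : nat -> pset) : (forall n, borel (A n)) ->
    borel (fun z => exists n, A n z)
| borel_ext A B : borel A -> (forall z, A z <-> B z) -> borel B.

(* Borel subsets of S (trace sigma-algebra, S closed) *)
Definition borel_in (S X : pset) : Prop := borel X /\ forall z, X z -> S z.

Definition finite_borel_measure_on (S : pset) (mu : pset -> R) : Prop :=
  (forall X, borel_in S X -> 0 <= mu X) /\
  mu (fun _ => False) = 0 /\
  (forall A : nat -> pset, (forall n, borel_in S (A n)) ->
     (forall n m z, n <> m -> A n z -> A m z -> False) ->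
     infinite_sum (fun n => mu (A n)) (mu (fun z => exists n, A n z))).

Definition angular_measure (K : pset) (mu : pset -> R) : Prop :=
  finite_borel_measure_on (boundary K) mu /\
  mu (boundary K) = 2 * PI /\
  (forall X, borel_in (boundary K) X -> mu X = mu (fun z => X (popp z))) /\
  (forall x, boundary K x -> mu (fun z => z = x) = 0).

Definition arc_param (S : pset) (g : R -> pt) (x y : pt) : Prop :=
  (forall t, 0 <= t <= 1 -> S (g t)) /\
  (forall t s, 0 <= t <= 1 -> 0 <= s <= 1 -> g t = g s -> t = s) /\
  (forall t, 0 <= t <= 1 -> forall eps, 0 < eps -> exists delta, 0 < delta /\
     forall s, 0 <= s <= 1 -> Rabs (s - t) < delta -> pdist (g s) (g t) < eps) /\
  g 0 = x /\ g 1 = y.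
Definition arc_set (g : R -> pt) : pset :=
  fun z => exists t, 0 <= t <= 1 /\ z = g t.

Definition B_measure (K : pset) (mu : pset -> R) : Prop :=
  angular_measure K mu /\
  forall g x y, arc_param (boundary K) g x y ->
    (forall z, arc_set g z -> ~ arc_set g (popp z)) ->
    birkhoff K x y ->
    mu (arc_set g) = PI / 2.

Definition auerbach (K : pset) (x : pt) : Prop :=
  boundary K x /\ exists y, boundary K y /\ birkhoff K x y /\ birkhoff K y x.

Definition E_set (K : pset) (x : pt) : Prop :=
  exists a b, a <> b /\
    (forall s, 0 < s < 1 -> boundary K (padd (pscale (1 - s) a) (pscale s b))) /\
    exists s, 0 < s < 1 /\ x = padd (pscale (1 - s) a) (pscale s b).

Definition support (K : pset) (mu : pset -> R) (x : pt) : Prop :=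
  boundary K x /\
  forall O, is_open O -> O x -> 0 < mu (fun z => O z /\ boundary K z).

(* Main.v *)
From Stdlib Require Import Reals Lra Psatz ClassicalEpsilon Classical FunctionalExtensionality PropExtensionality Lia.
Require Import Defs.
Open Scope R_scope.


Lemma pt_eq (a b : pt) : fst a = fst b -> snd a = snd b -> a = b.
Proof. destruct a, b; simpl; intros; subst; reflexivity. Qed.

Lemma pdist_ge1 a b : Rabs (fst a - fst b) <= pdist a b.
Proof.
  unfold pdist. rewrite <- sqrt_Rsqr_abs. apply sqrt_le_1_alt.
  unfold Rsqr. set (u := fst a - fst b). set (v := snd a - snd b). nra.
Qed.

Lemma pdist_ge2 a b : Rabs (snd a - snd b) <= pdist a b.
Proof.
  unfold pdist. rewrite <- sqrt_Rsqr_abs. apply sqrt_le_1_alt.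
  unfold Rsqr. set (u := fst a - fst b). set (v := snd a - snd b). nra.
Qed.

Lemma pdist_le a b : pdist a b <= Rabs (fst a - fst b) + Rabs (snd a - snd b).
Proof.
  unfold pdist.
  set (u := fst a - fst b). set (v := snd a - snd b).
  rewrite <- (sqrt_square (Rabs u + Rabs v)) by (pose proof (Rabs_pos u); pose proof (Rabs_pos v); lra).
  apply sqrt_le_1_alt.
  pose proof (Rabs_pos u); pose proof (Rabs_pos v).
  assert (Rabs u * Rabs u = u^2) by (rewrite <- Rabs_mult; rewrite Rabs_right; [ring| nra]).
  assert (Rabs v * Rabs v = v^2) by (rewrite <- Rabs_mult; rewrite Rabs_right; [ring| nra]).
  nra.
Qed.

Definition det (u v : pt) : R := fst u * snd v - snd u * fst v.

Lemma Rdiv_le_0_compat a b : 0 <= a -> 0 < b -> 0 <= a / b.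
Proof. intros. unfold Rdiv. apply Rmult_le_pos; auto. left; apply Rinv_0_lt_compat; auto. Qed.


Definition Eset (K : pset) (x : pt) : R -> Prop :=
  fun l => 0 < l /\ exists y, K y /\ x = pscale l y.

Lemma glb_unique E a b : is_glb E a -> is_glb E b -> a = b.
Proof. intros [H1 H2] [H3 H4]. apply Rle_antisym; auto. Qed.

Lemma le_of_forall_gt (a b : R) : (forall l, a < l -> b <= l) -> b <= a.
Proof.
  intros H. destruct (Rle_or_lt b a) as [|Hlt]; auto.
  specialize (H ((a+b)/2) ltac:(lra)). lra.
Qed.

Section Gauge.
Variable K : pset.
Hypothesis HK : sym_convex_body K.

Lemma K_closed : is_closed K. Proof. apply HK. Qed.
Lemma K_bounded : is_bounded K. Proof. apply HK. Qed.
Lemma K_convex : convex K. Proof. apply HK. Qed.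
Lemma K_sym x : K x -> K (popp x). Proof. apply HK. Qed.

Lemma conv_pt (x y z : pt) s : 0 <= s <= 1 -> K x -> K y ->
  fst z = (1-s) * fst x + s * fst y -> snd z = (1-s) * snd x + s * snd y -> K z.
Proof.
  intros Hs Hx Hy E1 E2.
  replace z with (padd (pscale (1 - s) x) (pscale s y)).
  - apply K_convex; auto.
  - apply pt_eq; simpl; lra.
Qed.

Lemma zero_ball : exists r, 0 < r /\ forall w, pdist w pzero < r -> K w.
Proof.
  destruct HK as (_ & _ & _ & (x0 & r & Hr & Hball) & _).
  exists r; split; auto. intros w Hw.
  assert (H1 : K (padd x0 w)).
  { apply Hball. replace (pdist (padd x0 w) x0) with (pdist w pzero); auto.
    unfold pdist, padd, pzero; simpl. f_equal. ring. }
  assert (H2 : K (padd x0 (popp w))).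
  { apply Hball. replace (pdist (padd x0 (popp w)) x0) with (pdist w pzero); auto.
    unfold pdist, padd, popp, pzero; simpl. f_equal. ring. }
  apply K_sym in H2.
  eapply (conv_pt _ _ _ (1/2)); [lra|exact H1|exact H2|simpl;lra|simpl;lra].
Qed.

Lemma K0 : K pzero.
Proof.
  destruct zero_ball as (r & Hr & H). apply H.
  eapply Rle_lt_trans; [apply pdist_le|]. rewrite !Rminus_diag, Rabs_R0. lra.
Qed.

Lemma K_scale z s : K z -> 0 <= s <= 1 -> K (pscale s z).
Proof.
  intros Hz Hs. apply (conv_pt _ _ _ s Hs K0 Hz); simpl; lra.
Qed.

Lemma Eset_nonempty x : exists l, Eset K x l.
Proof.
  destruct zero_ball as (r & Hr & H).
  set (S := Rabs (fst x) + Rabs (snd x)).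
  assert (HS : 0 <= S) by (unfold S; pose proof (Rabs_pos (fst x)); pose proof (Rabs_pos (snd x)); lra).
  set (l := 2 * S / r + 1).
  assert (Hl : 0 < l) by (unfold l; assert (0 <= 2 * S / r) by (apply Rdiv_le_0_compat; lra); lra).
  exists l. split; auto. exists (pscale (/l) x). split.
  - apply H. eapply Rle_lt_trans; [apply pdist_le|]. unfold pscale, pzero; simpl.
    rewrite !Rminus_0_r, !Rabs_mult, Rabs_inv, (Rabs_right l) by lra.
    fold S. 
    assert (S / l < r).
    { apply Rmult_lt_reg_r with l; auto. unfold Rdiv. rewrite Rmult_assoc, Rinv_l by lra.
      unfold l. unfold Rdiv. rewrite Rmult_plus_distr_l.
      replace (r * (2 * S * / r)) with (2 * S) by (field; lra). lra. }
    unfold Rdiv in H0. unfold S in H0. nra.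
  - apply pt_eq; unfold pscale; simpl; field; lra.
Qed.

Lemma gauge_ex x : exists r, gauge K x r.
Proof.
  destruct (completeness (fun m => Eset K x (- m))) as (m & Hub & Hlub).
  - exists 0. intros m [Hm _]. lra.
  - destruct (Eset_nonempty x) as (l & Hl). exists (-l). rewrite Ropp_involutive. auto.
  - exists (-m). split.
    + intros l Hl. assert (-l <= m). { apply Hub. rewrite Ropp_involutive; auto. } lra.
    + intros b Hb. assert (m <= -b).
      { apply Hlub. intros m' Hm'. specialize (Hb _ Hm'). lra. } lra.
Qed.

Definition Nf (x : pt) : R := epsilon (inhabits 0) (fun r => gauge K x r).

Lemma Nf_spec x : gauge K x (Nf x).
Proof. unfold Nf. apply epsilon_spec. apply gauge_ex. Qed.

Lemma gauge_iff x r : gauge K x r <-> r = Nf x.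
Proof.
  split.
  - intros H. eapply glb_unique; eauto. apply Nf_spec.
  - intros ->. apply Nf_spec.
Qed.

Lemma Nf_up x l : Eset K x l -> Nf x <= l.
Proof. intros H. destruct (Nf_spec x) as [H1 _]. apply H1, H. Qed.

Lemma Nf_low x b : (forall l, Eset K x l -> b <= l) -> b <= Nf x.
Proof. intros H. destruct (Nf_spec x) as [_ H1]. apply H1, H. Qed.

Lemma Nf_nonneg x : 0 <= Nf x.
Proof. apply Nf_low. intros l [Hl _]. lra. Qed.

Lemma Nf_mem x l : Nf x < l -> Eset K x l.
Proof.
  intros Hl.
  assert (exists l', Eset K x l' /\ l' < l) as (l' & (Hl'0 & y & Hy & Hxy) & Hl'l).
  { apply NNPP. intros Hn. assert (l <= Nf x); [|lra].
    apply Nf_low. intros l0 H0. destruct (Rle_or_lt l l0); auto. exfalso. apply Hn; eauto. }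
  split; [lra|]. exists (pscale (l'/l) y). split.
  - apply K_scale; auto. split; [apply Rdiv_le_0_compat; lra|].
    apply Rmult_le_reg_r with l; [lra|]. unfold Rdiv; rewrite Rmult_assoc, Rinv_l; lra.
  - subst x. apply pt_eq; unfold pscale; simpl; field; lra.
Qed.

Lemma Nf_zero : Nf pzero = 0.
Proof.
  apply Rle_antisym; [|apply Nf_nonneg].
  apply le_of_forall_gt. intros l Hl. apply Nf_up. split; auto.
  exists pzero. split; [apply K0|]. apply pt_eq; unfold pscale, pzero; simpl; ring.
Qed.

Lemma Eset_scale x c l : 0 < c -> Eset K x l -> Eset K (pscale c x) (c * l).
Proof.
  intros Hc (Hl & y & Hy & ->). split; [nra|]. exists y; split; auto.
  apply pt_eq; unfold pscale; simpl; ring.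
Qed.

Lemma Eset_opp x l : Eset K x l -> Eset K (popp x) l.
Proof.
  intros (Hl & y & Hy & ->). split; auto. exists (popp y); split; [apply K_sym; auto|].
  apply pt_eq; unfold pscale, popp; simpl; ring.
Qed.

Lemma Nf_scale_pos x c : 0 < c -> Nf (pscale c x) = c * Nf x.
Proof.
  intros Hc. apply Rle_antisym.
  - apply le_of_forall_gt. intros l Hl.
    assert (Nf x < l / c).
    { apply Rmult_lt_reg_l with c; auto. replace (c * (l / c)) with l by (field; lra). lra. }
    apply Nf_up. replace l with (c * (l / c)) by (field; lra). apply Eset_scale; auto.
    apply Nf_mem; auto.
  - apply Nf_low. intros l Hl.
    assert (H1 : Eset K (pscale (/c) (pscale c x)) (/c * l)).
    { apply Eset_scale; auto. apply Rinv_0_lt_compat; auto. }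
    replace (pscale (/c) (pscale c x)) with x in H1
      by (apply pt_eq; unfold pscale; simpl; field; lra).
    apply Nf_up in H1.
    apply Rmult_le_compat_l with (r := c) in H1; [|lra].
    replace (c * (/c * l)) with l in H1 by (field; lra). exact H1.
Qed.

Lemma Nf_opp x : Nf (popp x) = Nf x.
Proof.
  assert (H : forall z, Nf (popp z) <= Nf z).
  { intros z. apply le_of_forall_gt. intros l Hl. apply Nf_up, Eset_opp, Nf_mem; auto. }
  apply Rle_antisym; auto. rewrite <- (H (popp x)).
  replace (popp (popp x)) with x by (apply pt_eq; unfold popp; simpl; ring). lra.
Qed.

Lemma Nf_scale c x : Nf (pscale c x) = Rabs c * Nf x.
Proof.
  destruct (Rtotal_order c 0) as [Hc|[Hc|Hc]].
  - replace (pscale c x) with (popp (pscale (-c) x)) by (apply pt_eq; unfold popp, pscale; simpl; ring).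
    rewrite Nf_opp, Nf_scale_pos by lra. rewrite Rabs_left; auto.
  - subst. replace (pscale 0 x) with pzero by (apply pt_eq; unfold pzero, pscale; simpl; ring).
    rewrite Nf_zero, Rabs_R0. ring.
  - rewrite Nf_scale_pos, Rabs_right; auto; lra.
Qed.

Lemma Nf_tri x y : Nf (padd x y) <= Nf x + Nf y.
Proof.
  apply le_of_forall_gt. intros l Hl.
  set (d := (l - Nf x - Nf y) / 2).
  assert (Hd : 0 < d) by (unfold d; lra).
  destruct (Nf_mem x (Nf x + d) ltac:(lra)) as (Ha & y1 & Hy1 & E1).
  destruct (Nf_mem y (Nf y + d) ltac:(lra)) as (Hb & y2 & Hy2 & E2).
  replace l with ((Nf x + d) + (Nf y + d)) by (unfold d; field).
  apply Nf_up. split; [lra|].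
  set (a := Nf x + d) in *. set (b := Nf y + d) in *.
  exists (padd (pscale (a/(a+b)) y1) (pscale (b/(a+b)) y2)). split.
  - apply (conv_pt y1 y2 _ (b/(a+b))); auto.
    + split; [apply Rdiv_le_0_compat; lra|].
      apply Rmult_le_reg_r with (a+b); [lra|]. unfold Rdiv; rewrite Rmult_assoc, Rinv_l; lra.
    + simpl. field. lra.
    + simpl. field. lra.
  - rewrite E1, E2. apply pt_eq; unfold padd, pscale; simpl; field; lra.
Qed.

Lemma K_bound : exists M, 0 <= M /\ forall z, K z -> Rabs (fst z) <= M /\ Rabs (snd z) <= M.
Proof.
  destruct K_bounded as (M & HM). exists M. split.
  - eapply Rle_trans; [|apply (HM pzero K0)]. apply sqrt_pos.
  - intros z Hz. specialize (HM z Hz). split.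
    + eapply Rle_trans; [|apply HM]. pose proof (pdist_ge1 z pzero). simpl in H.
      rewrite Rminus_0_r in H. auto.
    + eapply Rle_trans; [|apply HM]. pose proof (pdist_ge2 z pzero). simpl in H.
      rewrite Rminus_0_r in H. auto.
Qed.

Lemma small_le0 a M : 0 <= M -> (forall l, 0 < l -> a <= l * M) -> a <= 0.
Proof.
  intros HM H. destruct (Rle_or_lt a 0); auto.
  specialize (H (a / (2 * (M + 1))) ltac:(apply Rdiv_lt_0_compat; lra)).
  assert (a / (2 * (M + 1)) * M < a).
  { unfold Rdiv. rewrite Rmult_assoc.
    assert (/ (2 * (M + 1)) * M < 1).
    { apply Rmult_lt_reg_l with (2 * (M+1)); [lra|].
      rewrite <- Rmult_assoc, Rinv_r by lra. lra. }
    nra. }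
  lra.
Qed.

Lemma Nf_pos x : x <> pzero -> 0 < Nf x.
Proof.
  intros Hx. destruct (Rle_or_lt (Nf x) 0) as [H|]; auto. exfalso.
  destruct K_bound as (M & HM0 & HM).
  assert (forall l, 0 < l -> Rabs (fst x) <= l * M /\ Rabs (snd x) <= l * M).
  { intros l Hl. destruct (Nf_mem x l ltac:(lra)) as (_ & y & Hy & ->).
    destruct (HM y Hy). unfold pscale; simpl. rewrite !Rabs_mult, (Rabs_right l) by lra.
    split; apply Rmult_le_compat_l; lra. }
  apply Hx. apply pt_eq; simpl.
  - assert (Rabs (fst x) <= 0) by (apply (small_le0 _ _ HM0); intros; apply H0; auto).
    pose proof (Rabs_pos (fst x)). destruct (Req_dec (fst x) 0); auto.
    pose proof (Rabs_pos_lt _ H3). lra.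
  - assert (Rabs (snd x) <= 0) by (apply (small_le0 _ _ HM0); intros; apply H0; auto).
    pose proof (Rabs_pos (snd x)). destruct (Req_dec (snd x) 0); auto.
    pose proof (Rabs_pos_lt _ H3). lra.
Qed.

Lemma Nf_K x : K x <-> Nf x <= 1.
Proof.
  split.
  - intros Hx. apply Nf_up. split; [lra|]. exists x; split; auto.
    apply pt_eq; unfold pscale; simpl; ring.
  - intros H. apply NNPP. intros Hn.
    destruct (K_closed x Hn) as (rho & Hrho & Hb).
    set (S := Rabs (fst x) + Rabs (snd x)).
    assert (HS : 0 <= S) by (unfold S; pose proof (Rabs_pos (fst x)); pose proof (Rabs_pos (snd x)); lra).
    set (d := rho / (2 * (S + 1))).
    assert (Hd : 0 < d) by (apply Rdiv_lt_0_compat; lra).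
    destruct (Nf_mem x (1 + d) ltac:(lra)) as (_ & y & Hy & Ex).
    apply (Hb y); auto.
    eapply Rle_lt_trans; [apply pdist_le|].
    assert (E1 : fst y - fst x = - d * fst y) by (rewrite Ex; simpl; ring).
    assert (E2 : snd y - snd x = - d * snd y) by (rewrite Ex; simpl; ring).
    rewrite E1, E2, !Rabs_mult, Rabs_Ropp, (Rabs_right d) by lra.
    assert (Hy1 : Rabs (fst y) <= S).
    { unfold S. rewrite Ex; simpl. rewrite !Rabs_mult, (Rabs_right (1+d)) by lra.
      pose proof (Rabs_pos (fst y)); pose proof (Rabs_pos (snd y)). nra. }
    assert (Hy2 : Rabs (snd y) <= S).
    { unfold S. rewrite Ex; simpl. rewrite !Rabs_mult, (Rabs_right (1+d)) by lra.
      pose proof (Rabs_pos (fst y)); pose proof (Rabs_pos (snd y)). nra. }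
    assert (d * (2 * (S + 1)) = rho) by (unfold d; field; lra).
    nra.
Qed.

Definition Lc := Nf (1, 0) + Nf (0, 1).

Lemma Lc_nonneg : 0 <= Lc.
Proof. unfold Lc. pose proof (Nf_nonneg (1,0)); pose proof (Nf_nonneg (0,1)). lra. Qed.

Lemma Nf_lip_vec v : Nf v <= Lc * (Rabs (fst v) + Rabs (snd v)).
Proof.
  replace v with (padd (pscale (fst v) (1,0)) (pscale (snd v) (0,1)))
    by (apply pt_eq; unfold padd, pscale; simpl; ring).
  eapply Rle_trans; [apply Nf_tri|]. rewrite !Nf_scale. unfold Lc. simpl.
  rewrite !Rmult_1_r, !Rmult_0_r, !Rplus_0_r, !Rplus_0_l.
  pose proof (Nf_nonneg (1,0)); pose proof (Nf_nonneg (0,1)).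
  pose proof (Rabs_pos (fst v)); pose proof (Rabs_pos (snd v)). nra.
Qed.

Lemma Nf_lip a b : Rabs (Nf a - Nf b) <= Lc * (Rabs (fst a - fst b) + Rabs (snd a - snd b)).
Proof.
  assert (H : forall a b, Nf a - Nf b <= Lc * (Rabs (fst a - fst b) + Rabs (snd a - snd b))).
  { intros a0 b0. set (v := padd a0 (popp b0)).
    assert (Nf a0 <= Nf v + Nf b0).
    { replace a0 with (padd v b0) at 1 by (apply pt_eq; unfold v, padd, popp; simpl; ring). apply Nf_tri. }
    pose proof (Nf_lip_vec v) as H1.
    assert (Ev1 : fst v = fst a0 - fst b0) by (unfold v; simpl; ring).
    assert (Ev2 : snd v = snd a0 - snd b0) by (unfold v; simpl; ring).
    rewrite Ev1, Ev2 in H1. lra. }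
  apply Rabs_le. split.
  - specialize (H b a). rewrite (Rabs_minus_sym (fst b)), (Rabs_minus_sym (snd b)) in H. lra.
  - apply H.
Qed.

Lemma Nf_interior x : interior K x <-> Nf x < 1.
Proof.
  split.
  - intros (r & Hr & Hb).
    set (S := Rabs (fst x) + Rabs (snd x)).
    assert (HS : 0 <= S) by (unfold S; pose proof (Rabs_pos (fst x)); pose proof (Rabs_pos (snd x)); lra).
    set (d := r / (2 * (S + 1))).
    assert (Hd : 0 < d) by (apply Rdiv_lt_0_compat; lra).
    assert (K (pscale (1 + d) x)) as Hw.
    { apply Hb. eapply Rle_lt_trans; [apply pdist_le|]. simpl.
      replace ((1 + d) * fst x - fst x) with (d * fst x) by ring.
      replace ((1 + d) * snd x - snd x) with (d * snd x) by ring.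
      rewrite !Rabs_mult, (Rabs_right d) by lra.
      assert (d * (2 * (S + 1)) = r) by (unfold d; field; lra). unfold S in *. 
      pose proof (Rabs_pos (fst x)); pose proof (Rabs_pos (snd x)). nra. }
    apply Nf_K in Hw. rewrite Nf_scale, Rabs_right in Hw by lra.
    pose proof (Nf_nonneg x). nra.
  - intros H. pose proof Lc_nonneg.
    set (r := (1 - Nf x) / (2 * (Lc + 1))).
    assert (Hr : 0 < r) by (apply Rdiv_lt_0_compat; lra).
    exists r. split; auto. intros w Hw. apply Nf_K.
    pose proof (Nf_lip w x). pose proof (pdist_ge1 w x). pose proof (pdist_ge2 w x).
    assert (r * (2 * (Lc + 1)) = 1 - Nf x) by (unfold r; field; lra).
    pose proof (Rle_abs (Nf w - Nf x)). 
    assert (Rabs (fst w - fst x) + Rabs (snd w - snd x) <= 2 * r) by lra.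
    nra.
Qed.

Lemma closure_K x : closure K x -> K x.
Proof.
  intros H. apply NNPP. intros Hn. destruct (K_closed x Hn) as (rho & Hrho & Hb).
  destruct (H rho Hrho) as (w & Hw & Hd). apply (Hb w); auto.
Qed.

Lemma pdist_self a : pdist a a = 0.
Proof.
  apply Rle_antisym; [|apply sqrt_pos].
  eapply Rle_trans; [apply pdist_le|]. rewrite !Rminus_diag, Rabs_R0. lra.
Qed.

Lemma bd_iff x : boundary K x <-> Nf x = 1.
Proof.
  split.
  - intros [H1 H2]. apply closure_K, Nf_K in H1.
    destruct (Rle_lt_or_eq_dec _ _ H1); auto. exfalso; apply H2, Nf_interior; auto.
  - intros H. split.
    + intros r Hr. exists x. split; [apply Nf_K; lra|]. rewrite pdist_self; auto.
    + intros Hi. apply Nf_interior in Hi. lra.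
Qed.

Lemma bd_nonzero x : boundary K x -> x <> pzero.
Proof. intros H ->. apply bd_iff in H. rewrite Nf_zero in H. lra. Qed.

Lemma birk_iff x y : birkhoff K x y <->
  x <> pzero /\ y <> pzero /\ forall t, Nf x <= Nf (padd x (pscale t y)).
Proof.
  unfold birkhoff. split.
  - intros (H1 & H2 & H3). repeat split; auto. intros t. apply (H3 t); apply gauge_iff; auto.
  - intros (H1 & H2 & H3). repeat split; auto. intros t r s Hr Hs.
    apply gauge_iff in Hr, Hs. subst. auto.
Qed.

End Gauge.
Arguments K_closed {K} HK.
Arguments K_bounded {K} HK.
Arguments K_convex {K} HK.
Arguments K_sym {K} HK.
Arguments conv_pt {K} HK.
Arguments zero_ball {K} HK.
Arguments K0 {K} HK.
Arguments K_scale {K} HK.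
Arguments Eset_nonempty {K} HK.
Arguments gauge_ex {K} HK.
Arguments Nf_spec {K} HK.
Arguments gauge_iff {K} HK.
Arguments Nf_up {K} HK.
Arguments Nf_low {K} HK.
Arguments Nf_nonneg {K} HK.
Arguments Nf_mem {K} HK.
Arguments Nf_zero {K} HK.
Arguments Eset_opp {K} HK.
Arguments Nf_scale_pos {K} HK.
Arguments Nf_opp {K} HK.
Arguments Nf_scale {K} HK.
Arguments Nf_tri {K} HK.
Arguments K_bound {K} HK.
Arguments Nf_pos {K} HK.
Arguments Nf_K {K} HK.
Arguments Lc_nonneg {K} HK.
Arguments Nf_lip_vec {K} HK.
Arguments Nf_lip {K} HK.
Arguments Nf_interior {K} HK.
Arguments closure_K {K} HK.
Arguments bd_iff {K} HK.
Arguments bd_nonzero {K} HK.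
Arguments birk_iff {K} HK.


Lemma cont_lip (f : R -> R) t C : (forall s, Rabs (f s - f t) <= C * Rabs (s - t)) -> continuity_pt f t.
Proof.
  intros H. unfold continuity_pt, continue_in, limit1_in, limit_in. intros eps Heps.
  exists (eps / (Rabs C + 1)). split.
  - apply Rdiv_lt_0_compat; [lra|]. pose proof (Rabs_pos C); lra.
  - intros s [_ Hs]. simpl in *. unfold R_dist in *.
    pose proof (H s). pose proof (Rle_abs C). pose proof (Rabs_pos (s - t)). pose proof (Rabs_pos C).
    assert (Rabs (s - t) * (Rabs C + 1) < eps).
    { apply Rmult_lt_reg_r with (/ (Rabs C + 1)). apply Rinv_0_lt_compat; lra.
      rewrite Rmult_assoc, Rinv_r by lra. lra. }
    nra.
Qed.

Lemma cont_eps (f : R -> R) t : continuity_pt f t ->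
  forall eps, 0 < eps -> exists d, 0 < d /\ forall s, Rabs (s - t) < d -> Rabs (f s - f t) < eps.
Proof.
  intros H eps Heps. destruct (H eps Heps) as (d & Hd & Hd2). exists d. split; auto.
  intros s Hs. destruct (Req_dec s t).
  - subst. rewrite Rminus_diag, Rabs_R0. auto.
  - apply (Hd2 s). split; [split; auto; exact I|]. simpl. unfold R_dist. auto.
Qed.

Lemma scal_ex (u v : pt) : u <> pzero -> det u v = 0 -> exists l, v = pscale l u.
Proof.
  destruct u as [u1 u2], v as [v1 v2]. unfold det; simpl. intros Hu Hd.
  destruct (Req_dec u1 0).
  - subst. assert (u2 <> 0) by (intros ->; apply Hu; reflexivity).
    exists (v2 / u2). apply pt_eq; simpl.
    + assert (Hq : u2 * v1 = 0) by lra. assert (v1 = 0) by (apply Rmult_integral in Hq as [|]; [lra| auto]). subst; ring.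
    + field; auto.
  - exists (v1 / u1). apply pt_eq; simpl.
    + field; auto.
    + apply Rmult_eq_reg_l with u1; auto. field_simplify; auto. nra.
Qed.

Section Birk.
Variable K : pset.
Hypothesis HK : sym_convex_body K.
Local Notation N := (Nf K).

Lemma bd_pm u v : boundary K u -> boundary K v -> det u v = 0 -> v = u \/ v = popp u.
Proof.
  intros Hu Hv Hd. destruct (scal_ex u v (bd_nonzero HK u Hu) Hd) as (l & ->).
  apply (bd_iff HK) in Hu, Hv. rewrite (Nf_scale HK), Hu in Hv.
  assert (Rabs l = 1) by lra.
  destruct (Rcase_abs l).
  - rewrite Rabs_left in H by lra. right. apply pt_eq; unfold pscale, popp; simpl; nra.
  - rewrite Rabs_right in H by lra. left. apply pt_eq; unfold pscale; simpl; subst; ring.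
Qed.

Lemma birk_scale x y c : birkhoff K x y -> c <> 0 -> birkhoff K x (pscale c y).
Proof.
  intros H Hc. apply (birk_iff HK) in H as (H1 & H2 & H3). apply (birk_iff HK).
  repeat split; auto.
  - intros E. apply H2. apply pt_eq.
    + pose proof (f_equal fst E) as Hq. simpl in Hq. apply Rmult_integral in Hq as [|]; auto; lra.
    + pose proof (f_equal snd E) as Hq. simpl in Hq. apply Rmult_integral in Hq as [|]; auto; lra.
  - intros t. specialize (H3 (t * c)).
    replace (padd x (pscale t (pscale c y))) with (padd x (pscale (t * c) y)); auto.
    apply pt_eq; unfold padd, pscale; simpl; ring.
Qed.

Lemma birk_det x y : boundary K x -> boundary K y -> birkhoff K x y -> det x y <> 0.
Proof.
  intros Hx Hy Hb Hd. apply (birk_iff HK) in Hb as (_ & _ & H3).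
  pose proof (bd_iff HK x) as [Hx1 _]. specialize (Hx1 Hx).
  destruct (bd_pm x y Hx Hy Hd) as [->| ->].
  - specialize (H3 (-1)). replace (padd x (pscale (-1) x)) with pzero in H3
      by (apply pt_eq; unfold padd, pscale, pzero; simpl; ring).
    rewrite (Nf_zero HK) in H3. lra.
  - specialize (H3 1). replace (padd x (pscale 1 (popp x))) with pzero in H3
      by (apply pt_eq; unfold padd, pscale, popp, pzero; simpl; ring).
    rewrite (Nf_zero HK) in H3. lra.
Qed.

Lemma normalize_bd y : y <> pzero -> boundary K (pscale (/ N y) y).
Proof.
  intros Hy. apply (bd_iff HK). rewrite (Nf_scale HK).
  pose proof (Nf_pos HK y Hy). rewrite Rabs_right.
  - field; lra.
  - left; apply Rinv_0_lt_compat; auto.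
Qed.

Lemma HB_supp x : boundary K x -> exists y, boundary K y /\ birkhoff K x y.
Proof.
  intros Hx. pose proof (bd_iff HK x) as [Hx1 _]. specialize (Hx1 Hx).
  pose proof (bd_nonzero HK x Hx) as Hx0.
  set (w := (- snd x, fst x)).
  set (L := fun u => u - N (padd (pscale u x) (popp w))).
  set (U := fun v => N (padd (pscale v x) w) - v).
  assert (HLU : forall u v, L u <= U v).
  { intros u v. unfold L, U.
    pose proof (Nf_tri HK (padd (pscale u x) (popp w)) (padd (pscale v x) w)) as T.
    replace (padd (padd (pscale u x) (popp w)) (padd (pscale v x) w)) with (pscale (u+v) x) in T
      by (apply pt_eq; unfold padd, pscale, popp; simpl; ring).
    rewrite (Nf_scale HK), Hx1 in T. pose proof (Rle_abs (u+v)). lra. }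
  assert (Hb1 : bound (fun m => exists u, m = L u)).
  { exists (U 0). intros m (u & ->). apply HLU. }
  assert (Hb2 : exists m, (fun m => exists u, m = L u) m) by (exists (L 0); exists 0; reflexivity).
  destruct (completeness _ Hb1 Hb2) as (c & Hub & Hlub).
  assert (Hc1 : forall u, L u <= c) by (intros u; apply Hub; exists u; reflexivity).
  assert (Hc2 : forall v, c <= U v).
  { intros v. apply Hlub. intros m (u & ->). apply HLU. }
  assert (Hmain : forall s t, s + t * c <= N (padd (pscale s x) (pscale t w))).
  { intros s t. destruct (Rtotal_order t 0) as [Ht|[Ht|Ht]].
    - specialize (Hc1 (s / - t)). unfold L in Hc1.
      replace (padd (pscale s x) (pscale t w)) with (pscale (-t) (padd (pscale (s / - t) x) (popp w)))
        by (apply pt_eq; unfold padd, pscale, popp; simpl; field; lra).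
      rewrite (Nf_scale HK), Rabs_right by lra.
      apply Rmult_le_compat_l with (r := -t) in Hc1; [|lra].
      replace (-t * (s / - t - N (padd (pscale (s / - t) x) (popp w)))) with (s - -t * N (padd (pscale (s / - t) x) (popp w))) in Hc1 by (field; lra).
      lra.
    - subst. replace (padd (pscale s x) (pscale 0 w)) with (pscale s x)
        by (apply pt_eq; unfold padd, pscale; simpl; ring).
      rewrite (Nf_scale HK), Hx1. pose proof (Rle_abs s). lra.
    - specialize (Hc2 (s / t)). unfold U in Hc2.
      replace (padd (pscale s x) (pscale t w)) with (pscale t (padd (pscale (s / t) x) w))
        by (apply pt_eq; unfold padd, pscale; simpl; field; lra).
      rewrite (Nf_scale HK), Rabs_right by lra.
      apply Rmult_le_compat_l with (r := t) in Hc2; [|lra].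
      replace (t * (N (padd (pscale (s / t) x) w) - s / t)) with (t * N (padd (pscale (s / t) x) w) - s) in Hc2 by (field; lra).
      lra. }
  set (y0 := padd w (pscale (- c) x)).
  assert (Hdet : det x y0 = fst x ^ 2 + snd x ^ 2).
  { unfold y0, w, det, padd, pscale; simpl. ring. }
  assert (Hpos : 0 < fst x ^ 2 + snd x ^ 2).
  { destruct x as [a b]. simpl.
    destruct (Req_dec a 0); [destruct (Req_dec b 0)|].
    - subst. exfalso; apply Hx0; reflexivity.
    - assert (0 < b*b) by (apply Rsqr_pos_lt; auto). nra.
    - assert (0 < a*a) by (apply Rsqr_pos_lt; auto). nra. }
  assert (Hy0 : y0 <> pzero).
  { intros E. rewrite E in Hdet. unfold det, pzero in Hdet; simpl in Hdet. lra. }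
  exists (pscale (/ N y0) y0). split; [apply normalize_bd; auto|].
  apply birk_scale; [| apply Rinv_neq_0_compat; pose proof (Nf_pos HK y0 Hy0); lra].
  apply (birk_iff HK). repeat split; auto.
  intros t. rewrite Hx1. specialize (Hmain (1 - t * c) t).
  replace (padd x (pscale t y0)) with (padd (pscale (1 - t * c) x) (pscale t w))
    by (apply pt_eq; unfold y0, padd, pscale; simpl; ring).
  lra.
Qed.

End Birk.
Arguments bd_pm {K} HK.
Arguments birk_scale {K} HK.
Arguments birk_det {K} HK.
Arguments normalize_bd {K} HK.
Arguments HB_supp {K} HK.


Definition Arc (K : pset) (u v : pt) : pset :=
  fun z => boundary K z /\ 0 <= det u z /\ 0 <= det z v.

Definition pp (u v : pt) (t : R) : pt := padd (pscale (1-t) u) (pscale t v).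
Definition garc (K : pset) (u v : pt) (t : R) : pt := pscale (/ Nf K (pp u v t)) (pp u v t).

Lemma det_pp1 u v t : det u (pp u v t) = t * det u v.
Proof. unfold det, pp, padd, pscale; simpl; ring. Qed.
Lemma det_pp2 u v t : det (pp u v t) v = (1 - t) * det u v.
Proof. unfold det, pp, padd, pscale; simpl; ring. Qed.

Lemma pp_nz u v t : 0 <= t <= 1 -> 0 < det u v -> pp u v t <> pzero.
Proof.
  intros Ht Hd E. pose proof (det_pp1 u v t). pose proof (det_pp2 u v t).
  rewrite E in H, H0. replace (det u pzero) with 0 in H by (unfold det, pzero; simpl; ring).
  replace (det pzero v) with 0 in H0 by (unfold det, pzero; simpl; ring).
  set (D := det u v) in *. nra.
Qed.

Lemma decomp u v z : pscale (det u v) z = padd (pscale (det z v) u) (pscale (det u z) v).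
Proof. apply pt_eq; unfold det, padd, pscale; simpl; ring. Qed.

Section Arcs.
Variable K : pset.
Hypothesis HK : sym_convex_body K.
Local Notation N := (Nf K).
Variables u v : pt.
Hypothesis Hu : boundary K u.
Hypothesis Hv : boundary K v.
Hypothesis Huv : 0 < det u v.

Lemma Np_pos t : 0 <= t <= 1 -> 0 < N (pp u v t).
Proof. intros Ht. apply (Nf_pos HK). apply pp_nz; auto. Qed.

Lemma garc_bd t : 0 <= t <= 1 -> boundary K (garc K u v t).
Proof. intros Ht. apply (normalize_bd HK). apply pp_nz; auto. Qed.

Lemma det_garc1 t : 0 <= t <= 1 -> det u (garc K u v t) = t * det u v / N (pp u v t).
Proof.
  intros Ht. rewrite <- det_pp1. unfold garc, det, pscale; simpl. field.
  pose proof (Np_pos t Ht); lra.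
Qed.
Lemma det_garc2 t : 0 <= t <= 1 -> det (garc K u v t) v = (1 - t) * det u v / N (pp u v t).
Proof.
  intros Ht. rewrite <- det_pp2. unfold garc, det, pscale; simpl. field.
  pose proof (Np_pos t Ht); lra.
Qed.

Lemma garc_inj t s : 0 <= t <= 1 -> 0 <= s <= 1 -> garc K u v t = garc K u v s -> t = s.
Proof.
  intros Ht Hs E.
  pose proof (det_garc1 t Ht) as A1. pose proof (det_garc1 s Hs) as A2.
  pose proof (det_garc2 t Ht) as B1. pose proof (det_garc2 s Hs) as B2.
  rewrite E in A1, B1. rewrite A1 in A2. rewrite B1 in B2.
  pose proof (Np_pos t Ht). pose proof (Np_pos s Hs).
  set (a := N (pp u v t)) in *. set (b := N (pp u v s)) in *. set (D := det u v) in *.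
  assert (E1 : t * b = s * a).
  { apply Rmult_eq_reg_r with (D / (a * b)); [|unfold Rdiv; apply Rmult_integral_contrapositive_currified; [lra| apply Rinv_neq_0_compat; nra]].
    replace (t * b * (D / (a * b))) with (t * D / a) by (field; lra).
    replace (s * a * (D / (a * b))) with (s * D / b) by (field; lra). auto. }
  assert (E2 : (1 - t) * b = (1 - s) * a).
  { apply Rmult_eq_reg_r with (D / (a * b)); [|unfold Rdiv; apply Rmult_integral_contrapositive_currified; [lra| apply Rinv_neq_0_compat; nra]].
    replace ((1-t) * b * (D / (a * b))) with ((1-t) * D / a) by (field; lra).
    replace ((1-s) * a * (D / (a * b))) with ((1-s) * D / b) by (field; lra). auto. }
  assert (a = b) by lra. subst. nra.
Qed.

Lemma Np_lip t s : Rabs (N (pp u v s) - N (pp u v t)) <=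
  (Lc K * (Rabs (fst v - fst u) + Rabs (snd v - snd u))) * Rabs (s - t).
Proof.
  eapply Rle_trans; [apply (Nf_lip HK)|].
  unfold pp, padd, pscale; simpl.
  replace ((1 - s) * fst u + s * fst v - ((1 - t) * fst u + t * fst v)) with ((s - t) * (fst v - fst u)) by ring.
  replace ((1 - s) * snd u + s * snd v - ((1 - t) * snd u + t * snd v)) with ((s - t) * (snd v - snd u)) by ring.
  rewrite !Rabs_mult. pose proof (Lc_nonneg HK). pose proof (Rabs_pos (s - t)).
  pose proof (Rabs_pos (fst v - fst u)). pose proof (Rabs_pos (snd v - snd u)). nra.
Qed.

Lemma garc_cont t : 0 <= t <= 1 -> forall eps, 0 < eps -> exists delta, 0 < delta /\
  forall s, 0 <= s <= 1 -> Rabs (s - t) < delta -> pdist (garc K u v s) (garc K u v t) < eps.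
Proof.
  intros Ht eps Heps.
  assert (CN : continuity_pt (fun s => N (pp u v s)) t) by (eapply cont_lip; intros s; apply Np_lip).
  assert (C1 : continuity_pt (fun s => fst (pp u v s)) t).
  { apply cont_lip with (C := Rabs (fst v - fst u)). intros s. unfold pp, padd, pscale; simpl.
    replace ((1 - s) * fst u + s * fst v - ((1 - t) * fst u + t * fst v)) with ((s - t) * (fst v - fst u)) by ring.
    rewrite Rabs_mult. lra. }
  assert (C2 : continuity_pt (fun s => snd (pp u v s)) t).
  { apply cont_lip with (C := Rabs (snd v - snd u)). intros s. unfold pp, padd, pscale; simpl.
    replace ((1 - s) * snd u + s * snd v - ((1 - t) * snd u + t * snd v)) with ((s - t) * (snd v - snd u)) by ring.
    rewrite Rabs_mult. lra. }
  pose proof (Np_pos t Ht) as HNt.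
  assert (G1 := continuity_pt_div _ _ t C1 CN ltac:(lra)).
  assert (G2 := continuity_pt_div _ _ t C2 CN ltac:(lra)).
  destruct (cont_eps _ _ G1 (eps/2) ltac:(lra)) as (d1 & Hd1 & H1).
  destruct (cont_eps _ _ G2 (eps/2) ltac:(lra)) as (d2 & Hd2 & H2).
  exists (Rmin d1 d2). split; [apply Rmin_pos; auto|].
  intros s Hs Hst. eapply Rle_lt_trans; [apply pdist_le|].
  specialize (H1 s ltac:(pose proof (Rmin_l d1 d2); lra)).
  specialize (H2 s ltac:(pose proof (Rmin_r d1 d2); lra)).
  unfold div_fct in H1, H2.
  assert (Q1 : forall r, fst (garc K u v r) = fst (pp u v r) / N (pp u v r))
    by (intros; unfold garc, Rdiv; cbn [fst snd pscale]; ring).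
  assert (Q2 : forall r, snd (garc K u v r) = snd (pp u v r) / N (pp u v r))
    by (intros; unfold garc, Rdiv; cbn [fst snd pscale]; ring).
  rewrite !Q1, !Q2. lra.
Qed.

Lemma pp0 : pp u v 0 = u.
Proof. apply pt_eq; unfold pp, padd, pscale; simpl; ring. Qed.
Lemma pp1 : pp u v 1 = v.
Proof. apply pt_eq; unfold pp, padd, pscale; simpl; ring. Qed.

Lemma garc0 : garc K u v 0 = u.
Proof.
  unfold garc. rewrite pp0. apply (bd_iff HK) in Hu. rewrite Hu.
  apply pt_eq; unfold pscale; simpl; field.
Qed.
Lemma garc1 : garc K u v 1 = v.
Proof.
  unfold garc. rewrite pp1. apply (bd_iff HK) in Hv. rewrite Hv.
  apply pt_eq; unfold pscale; simpl; field.
Qed.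

Lemma garc_param : arc_param (boundary K) (garc K u v) u v.
Proof.
  split; [|split; [|split; [|split]]].
  - apply garc_bd.
  - apply garc_inj.
  - apply garc_cont.
  - apply garc0.
  - apply garc1.
Qed.

Lemma garc_set : arc_set (garc K u v) = Arc K u v.
Proof.
  apply functional_extensionality. intros z. apply propositional_extensionality. split.
  - intros (t & Ht & ->). split; [apply garc_bd; auto|].
    rewrite det_garc1, det_garc2 by auto. pose proof (Np_pos t Ht).
    split; apply Rdiv_le_0_compat; nra.
  - intros (Hz & H1 & H2).
    set (D := det u v) in *. set (al := det z v / D). set (be := det u z / D).
    assert (Hal : 0 <= al) by (apply Rdiv_le_0_compat; auto).
    assert (Hbe : 0 <= be) by (apply Rdiv_le_0_compat; auto).
    assert (Ez : z = padd (pscale al u) (pscale be v)).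
    { pose proof (decomp u v z) as Dz. fold D in Dz. apply pt_eq.
      - pose proof (f_equal fst Dz) as Q. unfold padd, pscale in Q |- *; cbn [fst snd] in Q |- *.
        unfold al, be. replace (det z v / D * fst u + det u z / D * fst v) with ((det z v * fst u + det u z * fst v) / D) by (field; lra).
        rewrite <- Q. field. lra.
      - pose proof (f_equal snd Dz) as Q. unfold padd, pscale in Q |- *; cbn [fst snd] in Q |- *.
        unfold al, be. replace (det z v / D * snd u + det u z / D * snd v) with ((det z v * snd u + det u z * snd v) / D) by (field; lra).
        rewrite <- Q. field. lra. }
    assert (Hs : 0 < al + be).
    { destruct (Rle_lt_or_eq_dec 0 (al + be) ltac:(lra)) as [Hlt|E]; [exact Hlt|].
      exfalso. apply (bd_nonzero HK z Hz). rewrite Ez.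
      assert (Ha : al = 0) by lra. assert (Hb : be = 0) by lra.
      apply pt_eq; unfold padd, pscale, pzero; cbn [fst snd]; rewrite Ha, Hb; ring. }
    exists (be / (al + be)). split.
    + split; [apply Rdiv_le_0_compat; lra|].
      apply Rmult_le_reg_r with (al + be); [lra|]. unfold Rdiv; rewrite Rmult_assoc, Rinv_l; lra.
    + assert (Epp : pp u v (be / (al + be)) = pscale (/ (al + be)) z).
      { rewrite Ez. apply pt_eq; unfold pp, padd, pscale; simpl; field; lra. }
      unfold garc. rewrite Epp, (Nf_scale HK). apply (bd_iff HK) in Hz. rewrite Hz.
      rewrite Rabs_right by (left; apply Rinv_0_lt_compat; lra).
      apply pt_eq; unfold pscale; simpl; field; lra.
Qed.

Lemma Arc_noanti z : Arc K u v z -> Arc K u v (popp z) -> False.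
Proof.
  intros (Hz & H1 & H2) (_ & H3 & H4).
  unfold det, popp in *; simpl in *.
  assert (E1 : det u z = 0) by (unfold det; lra).
  assert (E2 : det z v = 0) by (unfold det; lra).
  apply (bd_nonzero HK z Hz). pose proof (decomp u v z) as Dz.
  rewrite E1, E2 in Dz. apply pt_eq; simpl.
  - pose proof (f_equal fst Dz) as Q. unfold padd, pscale in Q; simpl in Q.
    assert (det u v * fst z = 0) by lra. apply Rmult_integral in H as [|]; auto; fold (det u v) in *; lra.
  - pose proof (f_equal snd Dz) as Q. unfold padd, pscale in Q; simpl in Q.
    assert (det u v * snd z = 0) by lra. apply Rmult_integral in H as [|]; auto; fold (det u v) in *; lra.
Qed.

Lemma garc_rev_param : arc_param (boundary K) (fun t => garc K u v (1 - t)) v u.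
Proof.
  split; [|split; [|split; [|split]]].
  - intros t Ht. apply garc_bd; lra.
  - intros t s Ht Hs E. apply garc_inj in E; lra.
  - intros t Ht eps Heps. destruct (garc_cont (1 - t) ltac:(lra) eps Heps) as (d & Hd & H).
    exists d. split; auto. intros s Hs Hst. apply H; [lra|].
    replace (1 - s - (1 - t)) with (- (s - t)) by ring. rewrite Rabs_Ropp; auto.
  - rewrite Rminus_0_r. apply garc1.
  - rewrite Rminus_diag. apply garc0.
Qed.

Lemma garc_rev_set : arc_set (fun t => garc K u v (1 - t)) = arc_set (garc K u v).
Proof.
  apply functional_extensionality. intros z. apply propositional_extensionality. split.
  - intros (t & Ht & ->). exists (1 - t). split; auto; lra.
  - intros (t & Ht & ->). exists (1 - t). split; [lra|]. f_equal; ring.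
Qed.

End Arcs.
Arguments Np_pos {K} HK.
Arguments garc_bd {K} HK.
Arguments det_garc1 {K} HK.
Arguments det_garc2 {K} HK.
Arguments garc_inj {K} HK.
Arguments Np_lip {K} HK.
Arguments garc_cont {K} HK.
Arguments garc0 {K} HK.
Arguments garc1 {K} HK.
Arguments garc_param {K} HK.
Arguments garc_set {K} HK.
Arguments Arc_noanti {K} HK.
Arguments garc_rev_param {K} HK.


Lemma set_ext (A B : pset) : (forall z, A z <-> B z) -> A = B.
Proof. intros H. apply functional_extensionality. intros z. apply propositional_extensionality. apply H. Qed.

Lemma is_open_ext (A B : pset) : (forall z, A z <-> B z) -> is_open A -> is_open B.
Proof. intros H. rewrite (set_ext A B H). auto. Qed.

Definition lipf (f : pt -> R) := exists C, 0 <= C /\ forall w z,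
  Rabs (f w - f z) <= C * (Rabs (fst w - fst z) + Rabs (snd w - snd z)).

Lemma lipf_open (f : pt -> R) : lipf f -> is_open (fun z => 0 < f z).
Proof.
  intros (C & HC & H) z Hz. exists (f z / (2 * (C + 1))). split.
  - apply Rdiv_lt_0_compat; lra.
  - intros w Hw. pose proof (pdist_ge1 w z). pose proof (pdist_ge2 w z).
    specialize (H w z). pose proof (Rle_abs (f z - f w)). rewrite Rabs_minus_sym in H.
    assert (E : f z / (2 * (C + 1)) * (2 * (C + 1)) = f z) by (field; lra).
    assert (Rabs (fst w - fst z) + Rabs (snd w - snd z) <= 2 * (f z / (2 * (C + 1)))) by lra.
    nra.
Qed.

Lemma lipf_neg f : lipf f -> lipf (fun z => - f z).
Proof.
  intros (C & HC & H). exists C. split; auto. intros w z.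
  replace (- f w - - f z) with (- (f w - f z)) by ring. rewrite Rabs_Ropp. auto.
Qed.

Lemma lipf_det1 a : lipf (fun z => det a z).
Proof.
  exists (Rabs (fst a) + Rabs (snd a)). split.
  - pose proof (Rabs_pos (fst a)); pose proof (Rabs_pos (snd a)); lra.
  - intros w z. unfold det.
    replace (fst a * snd w - snd a * fst w - (fst a * snd z - snd a * fst z))
      with (fst a * (snd w - snd z) - snd a * (fst w - fst z)) by ring.
    eapply Rle_trans; [apply Rabs_triang|]. rewrite Rabs_Ropp, !Rabs_mult.
    pose proof (Rabs_pos (fst a)); pose proof (Rabs_pos (snd a)).
    pose proof (Rabs_pos (fst w - fst z)); pose proof (Rabs_pos (snd w - snd z)). nra.
Qed.

Lemma lipf_det2 a : lipf (fun z => det z a).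
Proof.
  destruct (lipf_det1 a) as (C & HC & H). exists C. split; auto. intros w z.
  replace (det w a - det z a) with (- (det a w - det a z)) by (unfold det; ring).
  rewrite Rabs_Ropp. auto.
Qed.

Lemma open_lt f : lipf f -> is_open (fun z => f z < 0).
Proof.
  intros H. apply (is_open_ext (fun z => 0 < - f z)); [intros; lra|]. apply lipf_open, lipf_neg; auto.
Qed.

Lemma closed_ge f : lipf f -> is_closed (fun z => 0 <= f z).
Proof.
  intros H. unfold is_closed. apply (is_open_ext (fun z => f z < 0)); [intros; lra|]. apply open_lt; auto.
Qed.

Lemma borel_closed A : is_closed A -> borel A.
Proof.
  intros H. apply (borel_ext (fun z => ~ ~ A z)).
  - apply borel_compl, borel_open, H.
  - intros z; split; [apply NNPP|auto].
Qed.

Lemma borel_union2 A B : borel A -> borel B -> borel (fun z => A z \/ B z).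
Proof.
  intros HA HB. apply (borel_ext (fun z => exists n, (match n with O => A | _ => B end) z)).
  - apply borel_union. intros [|n]; auto.
  - intros z. split.
    + intros ([|n] & H); auto.
    + intros [H|H]; [exists O|exists (S O)]; auto.
Qed.

Lemma borel_inter A B : borel A -> borel B -> borel (fun z => A z /\ B z).
Proof.
  intros HA HB. apply (borel_ext (fun z => ~ (~ A z \/ ~ B z))).
  - apply borel_compl, borel_union2; apply borel_compl; auto.
  - intros z. split.
    + intros H. split; apply NNPP; intros H'; apply H; auto.
    + intros [H1 H2] [H|H]; auto.
Qed.

Lemma borel_empty : borel (fun _ => False).
Proof. apply borel_open. intros z []. Qed.

Lemma closed_singleton x : is_closed (fun z => z = x).
Proof.
  intros z Hz.
  destruct (Req_dec (fst z) (fst x)) as [E1|E1]; [destruct (Req_dec (snd z) (snd x)) as [E2|E2]|].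
  - exfalso. apply Hz. apply pt_eq; auto.
  - exists (Rabs (snd z - snd x)). split; [apply Rabs_pos_lt; lra|].
    intros w Hw Ew. subst w. pose proof (pdist_ge2 x z). rewrite Rabs_minus_sym in H. lra.
  - exists (Rabs (fst z - fst x)). split; [apply Rabs_pos_lt; lra|].
    intros w Hw Ew. subst w. pose proof (pdist_ge1 x z). rewrite Rabs_minus_sym in H. lra.
Qed.

Section Meas.
Variable K : pset.
Hypothesis HK : sym_convex_body K.
Variable mu : pset -> R.
Hypothesis HB : B_measure K mu.
Local Notation N := (Nf K).
Local Notation Sb := (boundary K).

Lemma HM : finite_borel_measure_on Sb mu. Proof. apply HB. Qed.

Lemma bd_closed : is_closed Sb.
Proof.
  unfold is_closed.
  apply (is_open_ext (fun z => 0 < N z - 1 \/ 0 < - (N z - 1))).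
  - intros z. rewrite (bd_iff HK). split; [intros [|] E; lra|].
    intros H. destruct (Rtotal_order (N z) 1) as [H1|[H1|H1]].
    + right; lra.
    + exfalso; apply H; auto.
    + left; lra.
  - assert (Hl : lipf (fun z => N z - 1)).
    { exists (Lc K). split; [apply (Lc_nonneg HK)|]. intros w z.
      replace (N w - 1 - (N z - 1)) with (N w - N z) by ring. apply (Nf_lip HK). }
    pose proof (lipf_open _ Hl) as O1. pose proof (lipf_open _ (lipf_neg _ Hl)) as O2.
    intros z [Hz|Hz].
    + destruct (O1 z Hz) as (r & Hr & H). exists r; split; [auto|]. intros w Hw. left; apply H; auto.
    + destruct (O2 z Hz) as (r & Hr & H). exists r; split; [auto|]. intros w Hw. right; apply H; auto.
Qed.

Definition BS (X : pset) := borel_in Sb X.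

Lemma BS_mk X : borel X -> (forall z, X z -> Sb z) -> BS X.
Proof. intros; split; auto. Qed.

Lemma BS_inter_bd A : borel A -> BS (fun z => Sb z /\ A z).
Proof.
  intros H. split; [|intros z [? ?]; auto].
  apply borel_inter; auto. apply borel_closed, bd_closed.
Qed.

Lemma mu_ext A B : (forall z, A z <-> B z) -> mu A = mu B.
Proof. intros H. rewrite (set_ext A B H). auto. Qed.

Lemma mu_nonneg X : BS X -> 0 <= mu X.
Proof. apply HM. Qed.

Lemma mu_add A B : BS A -> BS B -> (forall z, A z -> B z -> False) ->
  mu (fun z => A z \/ B z) = mu A + mu B.
Proof.
  intros HA HB' Hd. destruct HM as (_ & H0 & Hc).
  set (F := fun n : nat => match n with O => A | S O => B | _ => fun _ => False end).
  assert (HF : forall n, BS (F n)).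
  { intros [|[|n]]; simpl; auto. split; [apply borel_empty|intros z []]. }
  assert (HD : forall n m z, n <> m -> F n z -> F m z -> False).
  { intros [|[|n]] [|[|m]] z Hnm; simpl; try tauto; intros; eauto. }
  specialize (Hc F HF HD).
  replace (mu (fun z => exists n, F n z)) with (mu (fun z => A z \/ B z)) in Hc.
  - apply (uniqueness_sum (fun n => mu (F n))); auto.
    intros eps Heps. exists 1%nat. intros n Hn. unfold R_dist.
    replace (sum_f_R0 (fun n => mu (F n)) n) with (mu A + mu B).
    + rewrite Rminus_diag, Rabs_R0. auto.
    + induction n.
      * lia.
      * destruct n.
        -- simpl. reflexivity.
        -- rewrite tech5. rewrite <- IHn by lia. simpl F. rewrite H0. ring.
  - apply mu_ext. intros z. split.
    + intros [H|H]; [exists O|exists (S O)]; auto.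
    + intros ([|[|n]] & H); simpl in H; tauto.
Qed.

Lemma BS_sub A B : BS A -> (forall z, B z -> A z) -> borel B -> BS B.
Proof. intros [_ H] H1 H2. split; auto. Qed.

Lemma BS_diff A B : BS A -> borel B -> BS (fun z => A z /\ ~ B z).
Proof.
  intros [H1 H2] H3. split; [|intros z [? ?]; auto]. apply borel_inter; auto. apply borel_compl; auto.
Qed.

Lemma mu_mono A B : BS A -> BS B -> (forall z, A z -> B z) -> mu A <= mu B.
Proof.
  intros HA HB' Hs.
  assert (E : mu B = mu (fun z => A z \/ (B z /\ ~ A z))).
  { apply mu_ext. intros z. split; [|intros [|[]]; auto].
    intros Hb. destruct (classic (A z)); auto. }
  rewrite E, mu_add; auto.
  - pose proof (mu_nonneg (fun z => B z /\ ~ A z) (BS_diff _ _ HB' (proj1 HA))). lra.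
  - apply BS_diff; auto. apply HA.
  - intros z H [_ H']; auto.
Qed.

Lemma mu_sub A B : BS A -> BS B -> mu (fun z => A z \/ B z) <= mu A + mu B.
Proof.
  intros HA HB'.
  assert (E : mu (fun z => A z \/ B z) = mu (fun z => A z \/ (B z /\ ~ A z))).
  { apply mu_ext. intros z. split; [|intros [|[]]; auto].
    intros [|Hb]; auto. destruct (classic (A z)); auto. }
  rewrite E, mu_add; auto.
  - pose proof (mu_mono (fun z => B z /\ ~ A z) B (BS_diff _ _ HB' (proj1 HA)) HB' ltac:(intros z []; auto)). lra.
  - apply BS_diff; auto. apply HA.
  - intros z H [_ H']; auto.
Qed.

End Meas.
Arguments HM {K mu} HB.
Arguments bd_closed {K} HK.
Arguments BS_inter_bd {K} HK.
Arguments mu_nonneg {K mu} HB.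
Arguments mu_add {K mu} HB.
Arguments mu_mono {K mu} HB.
Arguments mu_sub {K mu} HB.


Lemma plucker a b c d : det a b * det c d = det a c * det b d - det a d * det b c.
Proof. unfold det; ring. Qed.

Lemma det_opp_r a b : det a (popp b) = - det a b.
Proof. unfold det, popp; simpl; ring. Qed.
Lemma det_opp_l a b : det (popp a) b = - det a b.
Proof. unfold det, popp; simpl; ring. Qed.
Lemma det_anti a b : det b a = - det a b.
Proof. unfold det; ring. Qed.

Lemma borel_ge1 a : borel (fun z => 0 <= det a z).
Proof. apply borel_closed, closed_ge, lipf_det1. Qed.
Lemma borel_ge2 a : borel (fun z => 0 <= det z a).
Proof. apply borel_closed, closed_ge, lipf_det2. Qed.
Lemma borel_gt1 a : borel (fun z => 0 < det a z).
Proof. apply borel_open, lipf_open, lipf_det1. Qed.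
Lemma borel_lt1 a : borel (fun z => det a z < 0).
Proof. apply borel_open, open_lt, lipf_det1. Qed.
Lemma borel_sing x : borel (fun z => z = x).
Proof. apply borel_closed, closed_singleton. Qed.

Section Geo.
Variable K : pset.
Hypothesis HK : sym_convex_body K.
Variable mu : pset -> R.
Hypothesis HB : B_measure K mu.
Local Notation N := (Nf K).
Local Notation Sb := (boundary K).

Lemma borel_bd : borel Sb.
Proof. apply borel_closed, (bd_closed HK). Qed.

Lemma BSb (P : pset) : borel P -> BS K (fun z => Sb z /\ P z).
Proof. intros H. apply BS_mk; [apply borel_inter; auto; apply borel_bd|]. intros z []; auto. Qed.

Lemma bd_opp z : Sb (popp z) <-> Sb z.
Proof. rewrite !(bd_iff HK). rewrite (Nf_opp HK). tauto. Qed.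

Lemma mu_sing x : Sb x -> mu (fun z => z = x) = 0.
Proof. intros H. apply HB. auto. Qed.

Lemma BS_sing x : Sb x -> BS K (fun z => z = x).
Proof. intros H. apply BS_mk; [apply borel_sing|]. intros z ->; auto. Qed.

Lemma mu_symm X : BS K X -> mu X = mu (fun z => X (popp z)).
Proof. apply HB. Qed.

Lemma BS_Arc u v : BS K (Arc K u v).
Proof.
  apply BS_mk; [|intros z []; auto].
  apply borel_inter; [apply borel_bd|]. apply borel_inter; [apply borel_ge1|apply borel_ge2].
Qed.

Lemma BS_Z x : BS K (fun z => Sb z /\ det x z = 0).
Proof.
  apply BSb. apply (borel_ext (fun z => 0 <= det x z /\ 0 <= det z x)).
  - apply borel_inter; [apply borel_ge1|apply borel_ge2].
  - intros z; rewrite (det_anti z x); lra.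
Qed.

Lemma mu_pm x : Sb x -> mu (fun z => Sb z /\ det x z = 0) = 0.
Proof.
  intros Hx. assert (Hx' : Sb (popp x)) by (apply bd_opp; auto).
  apply Rle_antisym.
  - eapply Rle_trans.
    + apply (mu_mono HB _ (fun z => z = x \/ z = popp x)).
      * apply BS_Z.
      * apply BS_mk; [apply borel_union2; apply borel_sing|]. intros z [->| ->]; auto.
      * intros z [Hz Hd]. destruct (bd_pm HK x z Hx Hz Hd); auto.
    + eapply Rle_trans; [apply (mu_sub HB); apply BS_sing; auto|].
      rewrite !mu_sing; auto. lra.
  - apply (mu_nonneg HB). apply BS_Z.
Qed.

Lemma half x : Sb x -> mu (fun z => Sb z /\ 0 <= det x z) = PI.
Proof.
  intros Hx.
  set (HP := fun z => Sb z /\ 0 <= det x z).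
  set (HN := fun z => Sb z /\ 0 <= det z x).
  set (Ng := fun z => Sb z /\ det x z < 0).
  assert (BHP : BS K HP) by (apply BSb, borel_ge1).
  assert (BHN : BS K HN) by (apply BSb, borel_ge2).
  assert (BNg : BS K Ng) by (apply BSb, borel_lt1).
  assert (BZ := BS_Z x).
  assert (E1 : mu Sb = mu HP + mu Ng).
  { rewrite <- (mu_add HB); auto.
    - apply mu_ext. intros z; unfold HP, Ng. split; [|intros [[]|[]]; auto].
      intros Hz. destruct (Rle_or_lt 0 (det x z)); auto.
    - intros z [] []; lra. }
  assert (E2 : mu HP = mu HN).
  { rewrite (mu_symm HP BHP). apply mu_ext. intros z; unfold HP, HN. rewrite bd_opp, det_opp_r, (det_anti z x). split; intros [? ?]; split; auto; lra. }
  assert (E3 : mu HN <= mu Ng + 0).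
  { rewrite <- (mu_pm x Hx). eapply Rle_trans; [|apply (mu_sub HB); auto].
    apply (mu_mono HB); auto.
    - apply BS_mk; [apply borel_union2; [apply BNg|apply BZ]|]. intros z [[]|[]]; auto.
    - intros z [Hz Hd]. rewrite det_anti in Hd. destruct (Rle_lt_or_eq_dec 0 (- det x z) Hd); [left|right]; unfold Ng; split; auto; lra. }
  assert (E4 : mu Ng <= mu HN).
  { apply (mu_mono HB); auto. intros z [Hz Hd]. split; auto. rewrite det_anti. lra. }
  destruct HB as ((_ & Htot & _) & _). fold HP. lra.
Qed.

Lemma Arc_measure u v : Sb u -> Sb v -> 0 < det u v ->
  birkhoff K u v \/ birkhoff K v u -> mu (Arc K u v) = PI / 2.
Proof.
  intros Hu Hv Huv Hb. destruct HB as (_ & HBa).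
  destruct Hb as [Hb|Hb].
  - rewrite <- (garc_set HK u v Huv).
    apply (HBa _ u v (garc_param HK u v Hu Hv Huv)); auto.
    rewrite (garc_set HK u v Huv). intros z H1 H2; exact (Arc_noanti HK u v Huv z H1 H2).
  - rewrite <- (garc_set HK u v Huv), <- (garc_rev_set K u v).
    apply (HBa _ v u (garc_rev_param HK u v Hu Hv Huv)); auto.
    rewrite (garc_rev_set K u v), (garc_set HK u v Huv). intros z H1 H2; exact (Arc_noanti HK u v Huv z H1 H2).
Qed.

Lemma Arc_strict y w : Sb y ->
  mu (Arc K y w) <= mu (fun z => Sb z /\ 0 < det y z /\ 0 <= det z w).
Proof.
  intros Hy.
  assert (B1 : BS K (fun z => Sb z /\ 0 < det y z /\ 0 <= det z w)).
  { apply BSb. apply borel_inter; [apply borel_gt1|apply borel_ge2]. }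
  assert (H := mu_sub HB _ _ B1 (BS_Z y)). rewrite (mu_pm y Hy), Rplus_0_r in H.
  eapply Rle_trans; [|exact H].
  apply (mu_mono HB); [apply BS_Arc| |].
  - apply BS_mk; [apply borel_union2; [apply B1|apply BS_Z]|]. intros z [[]|[]]; auto.
  - intros z (Hz & H1 & H2). destruct (Rle_lt_or_eq_dec _ _ H1); [left|right]; auto.
Qed.

Lemma Arc_symm a b : mu (Arc K (popp a) (popp b)) = mu (Arc K a b).
Proof.
  rewrite (mu_symm _ (BS_Arc _ _)). apply mu_ext. intros z. unfold Arc.
  rewrite bd_opp, !det_opp_r, !det_opp_l, !Ropp_involutive. tauto.
Qed.

Definition chain x y w := Sb x /\ Sb y /\ Sb w /\ birkhoff K x y /\ birkhoff K y w /\
  0 < det x y /\ 0 < det y w.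

Lemma chain_L x y w : chain x y w -> 0 < det x w -> mu (Arc K (popp w) x) = 0.
Proof.
  intros (Hx & Hy & Hw & Bxy & Byw & Dxy & Dyw) Dxw.
  set (A1 := Arc K x y).
  set (A2 := fun z => Sb z /\ 0 < det y z /\ 0 <= det z w).
  set (A3 := fun z => Sb z /\ 0 < det w z /\ 0 <= det z (popp x)).
  assert (B1 : BS K A1) by apply BS_Arc.
  assert (B2 : BS K A2) by (apply BSb; apply borel_inter; [apply borel_gt1|apply borel_ge2]).
  assert (B3 : BS K A3) by (apply BSb; apply borel_inter; [apply borel_gt1|apply borel_ge2]).
  assert (M1 : mu A1 = PI / 2) by (apply Arc_measure; auto).
  assert (M2 : PI / 2 <= mu A2).
  { rewrite <- (Arc_measure y w); auto. apply Arc_strict; auto. }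
  assert (D12 : forall z, A1 z -> A2 z -> False).
  { intros z (_ & _ & H1) (_ & H2 & _). rewrite det_anti in H1. lra. }
  assert (D13 : forall z, A1 z -> A3 z -> False).
  { intros z (_ & H1 & H2) (_ & H3 & _).
    pose proof (plucker w z x y). rewrite (det_anti x w), (det_anti y w), (det_anti x z) in H. nra. }
  assert (D23 : forall z, A2 z -> A3 z -> False).
  { intros z (_ & _ & H1) (_ & H2 & _). rewrite det_anti in H1. lra. }
  assert (Hsum : mu (fun z => A1 z \/ (A2 z \/ A3 z)) = mu A1 + (mu A2 + mu A3)).
  { rewrite (mu_add HB); [|auto| |].
    - rewrite (mu_add HB); auto.
    - apply BS_mk; [apply borel_union2; [apply B2|apply B3]|]. intros z [[]|[]]; auto.
    - intros z H [H'|H']; eauto. }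
  assert (Hle : mu (fun z => A1 z \/ (A2 z \/ A3 z)) <= PI).
  { rewrite <- (half x Hx). apply (mu_mono HB).
    - apply BS_mk; [apply borel_union2; [apply B1|apply borel_union2; [apply B2|apply B3]]|].
      intros z [[]|[[]|[]]]; auto.
    - apply BSb, borel_ge1.
    - intros z [(Hz & H1 & H2)|[(Hz & H1 & H2)|(Hz & H1 & H2)]]; split; auto.
      + pose proof (plucker x z y w). rewrite (det_anti y z) in H. nra.
      + rewrite det_opp_r, det_anti in H2. lra. }
  assert (M3 : mu A3 <= 0) by lra.
  assert (M3' : mu (Arc K w (popp x)) <= 0).
  { eapply Rle_trans; [apply Arc_strict; auto|]. exact M3. }
  rewrite <- Arc_symm. replace (popp (popp w)) with w by (apply pt_eq; unfold popp; simpl; ring).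
  apply Rle_antisym; auto. apply (mu_nonneg HB). apply BS_Arc.
Qed.

Lemma chain_R x y w : chain x y w -> det x w < 0 -> mu (Arc K x (popp w)) = 0.
Proof.
  intros (Hx & Hy & Hw & Bxy & Byw & Dxy & Dyw) Dxw.
  set (A1 := Arc K x y). set (A2 := Arc K y w).
  set (HP := fun z => Sb z /\ 0 <= det x z).
  set (Bs := fun z => Sb z /\ det x z < 0 /\ 0 <= det z w).
  assert (BB : BS K Bs) by (apply BSb; apply borel_inter; [apply borel_lt1|apply borel_ge2]).
  assert (BHP : BS K HP) by (apply BSb, borel_ge1).
  assert (Hle : mu (fun z => HP z \/ Bs z) <= mu (fun z => A1 z \/ A2 z)).
  { apply (mu_mono HB).
    - apply BS_mk; [apply borel_union2; [apply BHP|apply BB]|]. intros z [[]|[]]; auto.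
    - apply BS_mk; [apply borel_union2; apply BS_Arc|]. intros z [[]|[]]; auto.
    - intros z [(Hz & H1)|(Hz & H1 & H2)].
      + destruct (Rle_or_lt 0 (det z y)).
        * left. unfold A1, Arc. split; [|split]; auto.
        * right. unfold A2, Arc. split; [|split]; auto.
          -- rewrite det_anti. lra.
          -- pose proof (plucker z w x y) as Q. rewrite (det_anti x z), (det_anti y w), (det_anti x w) in Q. nra.
      + right. unfold A2, Arc. split; [|split]; auto.
        pose proof (plucker y z x w) as Q. rewrite (det_anti x y), (det_anti x z) in Q. nra. }
  rewrite (mu_add HB) in Hle; auto; [|intros z (_ & H1) (_ & H2 & _); lra].
  pose proof (mu_sub HB A1 A2 (BS_Arc _ _) (BS_Arc _ _)).
  pose proof (half x Hx) as Hh. fold HP in Hh.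
  assert (M1 : mu A1 = PI / 2) by (apply Arc_measure; auto).
  assert (M2 : mu A2 = PI / 2) by (apply Arc_measure; auto).
  assert (MB : mu Bs <= 0) by lra.
  assert (M3 : mu (Arc K (popp x) w) <= 0).
  { assert (H9 := mu_sub HB _ _ BB (BS_Z x)). rewrite (mu_pm x Hx), Rplus_0_r in H9.
    eapply Rle_trans; [|apply MB]. eapply Rle_trans; [|exact H9].
    apply (mu_mono HB); [apply BS_Arc| |].
    - apply BS_mk; [apply borel_union2; [apply BB|apply BS_Z]|]. intros z [[]|[]]; auto.
    - intros z (Hz & H1 & H2). rewrite det_opp_l in H1.
      destruct (Rle_lt_or_eq_dec 0 (- det x z) H1); [left; unfold Bs; split; [|split]; auto; lra | right; split; auto; lra]. }
  rewrite <- Arc_symm. replace (popp (popp w)) with w by (apply pt_eq; unfold popp; simpl; ring).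
  apply Rle_antisym; auto. apply (mu_nonneg HB). apply BS_Arc.
Qed.

End Geo.
Arguments borel_bd {K} HK.
Arguments BSb {K} HK.
Arguments bd_opp {K} HK.
Arguments mu_sing {K mu} HB.
Arguments mu_symm {K mu} HB.
Arguments BS_Arc {K} HK.
Arguments BS_Z {K} HK.
Arguments mu_pm {K} HK {mu} HB.
Arguments half {K} HK {mu} HB.
Arguments Arc_measure {K} HK {mu} HB.
Arguments Arc_strict {K} HK {mu} HB.
Arguments Arc_symm {K} HK {mu} HB.
Arguments chain_L {K} HK {mu} HB.
Arguments chain_R {K} HK {mu} HB.


Lemma my_choice {A : Type} (P : nat -> A -> Prop) : (forall n, exists a, P n a) -> exists f : nat -> A, forall n, P n (f n).
Proof.
  intros H. exists (fun n => proj1_sig (constructive_indefinite_description _ (H n))).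
  intros n. apply (proj2_sig (constructive_indefinite_description _ (H n))).
Qed.

Lemma abs_le_inv a M : Rabs a <= M -> -M <= a <= M.
Proof. unfold Rabs. destruct (Rcase_abs a); lra. Qed.

Lemma inv_small eps : 0 < eps -> exists N : nat, forall n, (n >= N)%nat -> / (INR n + 1) < eps.
Proof.
  intros He. destruct (archimed_cor1 eps He) as (N & H1 & H2). exists N. intros n Hn.
  eapply Rle_lt_trans; [|apply H1].
  apply Rinv_le_contravar.
  - apply lt_0_INR; lia.
  - apply le_INR in Hn. lra.
Qed.

Lemma extract1 (u : nat -> R) M : (forall n, Rabs (u n) <= M) ->
  exists (phi : nat -> nat) l, (forall n, (n <= phi n)%nat) /\ Un_cv (fun n => u (phi n)) l.
Proof.
  intros H. destruct (Bolzano_Weierstrass u (fun c => -M <= c <= M) (compact_P3 (-M) M)) as (l & Hl).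
  { intros n. specialize (H n). apply abs_le_inv in H. lra. }
  assert (Hn : forall n, exists p, (n <= p)%nat /\ Rabs (u p - l) < / (INR n + 1)).
  { intros n. assert (Hpos : 0 < / (INR n + 1)) by (apply Rinv_0_lt_compat; pose proof (pos_INR n); lra).
    destruct (Hl (disc l (mkposreal _ Hpos)) n) as (p & Hp1 & Hp2).
    - exists (mkposreal _ Hpos). intros y Hy. auto.
    - exists p. split; auto. }
  destruct (my_choice _ Hn) as (phi & Hphi). exists phi, l. split; [intros n; apply Hphi|].
  intros eps He. destruct (inv_small eps He) as (N & HN). exists N. intros n Hn'.
  unfold Rdist. destruct (Hphi n) as [_ Hp]. specialize (HN n Hn'). lra.
Qed.

Lemma cv_sub (u : nat -> R) l (phi : nat -> nat) : Un_cv u l -> (forall n, (n <= phi n)%nat) ->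
  Un_cv (fun n => u (phi n)) l.
Proof.
  intros H Hp eps He. destruct (H eps He) as (N & HN). exists N. intros n Hn.
  apply HN. specialize (Hp n). lia.
Qed.

Definition pconv (p : nat -> pt) (q : pt) :=
  Un_cv (fun n => fst (p n)) (fst q) /\ Un_cv (fun n => snd (p n)) (snd q).

Lemma pconv_sub p q phi : pconv p q -> (forall n, (n <= phi n)%nat) -> pconv (fun n => p (phi n)) q.
Proof. intros [H1 H2] Hp. split; apply (cv_sub _ _ _ H1 Hp) || apply (cv_sub _ _ _ H2 Hp). Qed.

Lemma extract2 (p : nat -> pt) M : (forall n, Rabs (fst (p n)) <= M /\ Rabs (snd (p n)) <= M) ->
  exists (phi : nat -> nat) q, (forall n, (n <= phi n)%nat) /\ pconv (fun n => p (phi n)) q.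
Proof.
  intros H.
  destruct (extract1 (fun n => fst (p n)) M) as (phi1 & l1 & Hp1 & Hc1); [intros n; apply H|].
  destruct (extract1 (fun n => snd (p (phi1 n))) M) as (phi2 & l2 & Hp2 & Hc2); [intros n; apply H|].
  exists (fun n => phi1 (phi2 n)), (l1, l2). split.
  - intros n. specialize (Hp2 n). specialize (Hp1 (phi2 n)). lia.
  - split; simpl; auto. apply (cv_sub (fun n => fst (p (phi1 n))) l1 phi2 Hc1 Hp2).
Qed.

Lemma cv_ge (u : nat -> R) l c : Un_cv u l -> (forall n, c <= u n) -> c <= l.
Proof.
  intros H Hc. destruct (Rle_or_lt c l) as [|Hlt]; auto. exfalso.
  destruct (H (c - l) ltac:(lra)) as (N & HN). specialize (HN N (le_n N)). specialize (Hc N).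
  unfold Rdist in HN. apply Rabs_def2 in HN. lra.
Qed.

Lemma cv_eventually_pos (u : nat -> R) l : Un_cv u l -> 0 < l -> exists N, forall n, (n >= N)%nat -> 0 < u n.
Proof.
  intros H Hl. destruct (H l Hl) as (N & HN). exists N. intros n Hn. specialize (HN n Hn).
  unfold Rdist in HN. apply Rabs_def2 in HN. lra.
Qed.

Lemma cv_det a b A B : pconv a A -> pconv b B -> Un_cv (fun n => det (a n) (b n)) (det A B).
Proof.
  intros [A1 A2] [B1 B2]. unfold det. apply CV_minus; apply CV_mult; auto.
Qed.

Lemma cv_const c : Un_cv (fun _ => c) c.
Proof. intros eps He. exists O. intros n _. unfold Rdist. rewrite Rminus_diag, Rabs_R0. auto. Qed.

Lemma pconv_const q : pconv (fun _ => q) q.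
Proof. split; apply cv_const. Qed.

Lemma pconv_comb a b A B t : pconv a A -> pconv b B ->
  pconv (fun n => padd (a n) (pscale t (b n))) (padd A (pscale t B)).
Proof.
  intros [A1 A2] [B1 B2]. split; simpl; apply CV_plus; auto; apply CV_mult; auto; apply cv_const.
Qed.

Lemma cv_Nf K (HK : sym_convex_body K) a A : pconv a A -> Un_cv (fun n => Nf K (a n)) (Nf K A).
Proof.
  intros [A1 A2] eps He. pose proof (Lc_nonneg HK) as HL.
  set (e := eps / (2 * (Lc K + 1))).
  assert (He' : 0 < e) by (apply Rdiv_lt_0_compat; lra).
  destruct (A1 e He') as (N1 & H1). destruct (A2 e He') as (N2 & H2).
  exists (max N1 N2). intros n Hn. unfold Rdist.
  eapply Rle_lt_trans; [apply (Nf_lip HK)|].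
  specialize (H1 n ltac:(lia)). specialize (H2 n ltac:(lia)). unfold Rdist in H1, H2.
  assert (e * (2 * (Lc K + 1)) = eps) by (unfold e; field; lra).
  nra.
Qed.


Lemma open_inter (A B : pset) : is_open A -> is_open B -> is_open (fun z => A z /\ B z).
Proof.
  intros HA HB z [Az Bz]. destruct (HA z Az) as (r1 & Hr1 & H1). destruct (HB z Bz) as (r2 & Hr2 & H2).
  exists (Rmin r1 r2). split; [apply Rmin_pos; auto|]. intros w Hw. split.
  - apply H1. pose proof (Rmin_l r1 r2). lra.
  - apply H2. pose proof (Rmin_r r1 r2). lra.
Qed.

Lemma open_cone a b : is_open (fun z => 0 < det a z /\ 0 < det z b).
Proof. apply open_inter; apply lipf_open; [apply lipf_det1|apply lipf_det2]. Qed.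

Section Seg.
Variable K : pset.
Hypothesis HK : sym_convex_body K.
Variable mu : pset -> R.
Hypothesis HB : B_measure K mu.
Local Notation N := (Nf K).
Local Notation Sb := (boundary K).

Lemma no_support x O A : support K mu x -> is_open O -> O x -> BS K A -> mu A = 0 ->
  (forall z, O z -> Sb z -> A z) -> False.
Proof.
  intros (Hx & Hs) HO Ox HA HmA Hsub. specialize (Hs O HO Ox).
  assert (mu (fun z => O z /\ Sb z) <= mu A).
  { apply (mu_mono HB); auto.
    - apply BS_mk; [apply borel_inter; [apply borel_open; auto|apply (borel_bd HK)]|]. intros z []; auto.
    - intros z []; auto. }
  lra.
Qed.

Lemma N_pp_convex a b s1 s2 l : 0 <= l <= 1 ->
  N (pp a b (l * s1 + (1 - l) * s2)) <= l * N (pp a b s1) + (1 - l) * N (pp a b s2).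
Proof.
  intros Hl.
  replace (pp a b (l * s1 + (1 - l) * s2)) with (padd (pscale l (pp a b s1)) (pscale (1 - l) (pp a b s2)))
    by (apply pt_eq; unfold pp, padd, pscale; simpl; ring).
  eapply Rle_trans; [apply (Nf_tri HK)|]. rewrite !(Nf_scale HK), !Rabs_right by lra. lra.
Qed.

Lemma seg_ge1 a b : (forall s, 0 < s < 1 -> Sb (pp a b s)) -> forall sg, 1 <= N (pp a b sg).
Proof.
  intros Hs sg. apply Rnot_lt_le. intros Hlt.
  assert (Hm : N (pp a b (1/2)) = 1) by (apply (bd_iff HK), Hs; lra).
  destruct (Rlt_or_le 0 sg) as [H0|H0]; [destruct (Rlt_or_le sg 1) as [H1|H1]|].
  - assert (N (pp a b sg) = 1) by (apply (bd_iff HK), Hs; lra). lra.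
  - set (l := (1/4) / (sg - 1/4)).
    assert (Hl : 0 < l <= 1/3).
    { unfold l. split; [apply Rdiv_lt_0_compat; lra|].
      apply Rmult_le_reg_r with (sg - 1/4); [lra|]. unfold Rdiv. rewrite Rmult_assoc, Rinv_l; lra. }
    assert (E : l * sg + (1 - l) * (1/4) = 1/2) by (unfold l; field; lra).
    pose proof (N_pp_convex a b sg (1/4) l ltac:(lra)) as C. rewrite E, Hm in C.
    assert (N (pp a b (1/4)) = 1) by (apply (bd_iff HK), Hs; lra). nra.
  - set (l := (1/4) / (3/4 - sg)).
    assert (Hl : 0 < l <= 1/3).
    { unfold l. split; [apply Rdiv_lt_0_compat; lra|].
      apply Rmult_le_reg_r with (3/4 - sg); [lra|]. unfold Rdiv. rewrite Rmult_assoc, Rinv_l; lra. }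
    assert (E : l * sg + (1 - l) * (3/4) = 1/2) by (unfold l; field; lra).
    pose proof (N_pp_convex a b sg (3/4) l ltac:(lra)) as C. rewrite E, Hm in C.
    assert (N (pp a b (3/4)) = 1) by (apply (bd_iff HK), Hs; lra). nra.
Qed.

Lemma seg_birk a b : a <> b -> (forall s, 0 < s < 1 -> Sb (pp a b s)) ->
  forall s, 0 < s < 1 -> birkhoff K (pp a b s) (padd b (popp a)).
Proof.
  intros Hab Hs s Hs1. apply (birk_iff HK). split; [|split].
  - apply (bd_nonzero HK), Hs; auto.
  - intros E. apply Hab. apply pt_eq.
    + pose proof (f_equal fst E) as Q. unfold padd, popp, pzero in Q; simpl in Q. lra.
    + pose proof (f_equal snd E) as Q. unfold padd, popp, pzero in Q; simpl in Q. lra.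
  - intros t. rewrite ((proj1 (bd_iff HK _)) (Hs s Hs1)).
    replace (padd (pp a b s) (pscale t (padd b (popp a)))) with (pp a b (s + t))
      by (apply pt_eq; unfold pp, padd, pscale, popp; simpl; ring).
    apply (seg_ge1 a b Hs).
Qed.

Lemma seg_core a b s0 x : support K mu x -> a <> b -> (forall s, 0 < s < 1 -> Sb (pp a b s)) ->
  0 < s0 < 1 -> x = pp a b s0 -> 0 < det a b -> False.
Proof.
  intros Hsup Hab Hs Hs0 -> HD.
  set (d := padd b (popp a)).
  assert (Hd0 : d <> pzero).
  { intros E. apply Hab. apply pt_eq.
    + pose proof (f_equal fst E) as Q. unfold d, padd, popp, pzero in Q; simpl in Q. lra.
    + pose proof (f_equal snd E) as Q. unfold d, padd, popp, pzero in Q; simpl in Q. lra. }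
  pose proof (Nf_pos HK d Hd0) as HNd.
  set (y0 := pscale (/ N d) d).
  assert (Hy0 : Sb y0) by (apply (normalize_bd HK); auto).
  assert (Dqd : forall s, det (pp a b s) d = det a b) by (intros; unfold d, det, pp, padd, pscale, popp; simpl; ring).
  assert (Dqy : forall s, det (pp a b s) y0 = det a b / N d).
  { intros. unfold y0. rewrite <- (Dqd s). unfold det, pscale; simpl. field. lra. }
  assert (Dqq : forall s s', det (pp a b s) (pp a b s') = (s' - s) * det a b)
    by (intros; unfold det, pp, padd, pscale; simpl; ring).
  assert (Dzy : forall z, det z y0 = det z d / N d) by (intros; unfold y0, det, pscale; simpl; field; lra).
  assert (Bq : forall s, 0 < s < 1 -> birkhoff K (pp a b s) y0).
  { intros s Hs1. apply (birk_scale HK). apply seg_birk; auto. apply Rinv_neq_0_compat. lra. }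
  set (s1 := s0 / 2). set (s2 := (1 + s0) / 2).
  assert (Hs1 : 0 < s1 < 1) by (unfold s1; lra). assert (Hs2 : 0 < s2 < 1) by (unfold s2; lra).
  set (z1 := pp a b s1). set (z2 := pp a b s2).
  assert (M1 : mu (Arc K z1 y0) = PI / 2).
  { apply (Arc_measure HK HB).
    - apply Hs; auto.
    - auto.
    - unfold z1; rewrite Dqy; apply Rdiv_lt_0_compat; auto.
    - left; apply Bq; auto. }
  assert (M2 : mu (Arc K z2 y0) = PI / 2).
  { apply (Arc_measure HK HB).
    - apply Hs; auto.
    - auto.
    - unfold z2; rewrite Dqy; apply Rdiv_lt_0_compat; auto.
    - left; apply Bq; auto. }
  set (Df := fun z => Arc K z1 y0 z /\ det z2 z < 0).
  assert (BDf : BS K Df).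
  { apply BS_mk; [apply borel_inter; [apply (BS_Arc HK _ _)|apply borel_lt1]|]. intros z [[] _]; auto. }
  assert (Ez1 : forall z, det z1 z = det z2 z - (s2 - s1) * det d z)
    by (intros; unfold z1, z2, d, det, pp, padd, pscale, popp; simpl; ring).
  assert (MD : mu Df = 0).
  { assert (E : mu (Arc K z1 y0) = mu (fun z => Arc K z2 y0 z \/ Df z)).
    { apply mu_ext. intros z. split.
      - intros HA. destruct (Rle_or_lt 0 (det z2 z)); [left|right]; [|split; auto].
        destruct HA as (? & ? & ?). split; [|split]; auto.
      - intros [(Hz & H1 & H2)|[HA _]]; auto. split; [|split]; auto.
        rewrite Ez1, (det_anti z d). rewrite Dzy in H2. 
        assert (0 <= det z d).
        { apply Rmult_le_reg_r with (/ N d); [apply Rinv_0_lt_compat; lra|]. rewrite Rmult_0_l. exact H2. }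
        unfold s1, s2 in *. nra. }
    rewrite (mu_add HB) in E; [| apply (BS_Arc HK _ _) | auto | intros z (_ & H1 & _) (_ & H2); lra].
    lra. }
  apply (no_support (pp a b s0) (fun z => 0 < det z1 z /\ 0 < det z z2) Df Hsup (open_cone z1 z2)); auto.
  - unfold z1, z2. rewrite !Dqq. unfold s1, s2. split; apply Rmult_lt_0_compat; lra.
  - intros z (H1 & H2) Hz. split; [split; [auto|split]|].
    + lra.
    + rewrite Dzy. apply Rdiv_le_0_compat; [|lra].
      pose proof (plucker z d z1 z2) as Q.
      assert (det d z1 = - det a b) by (rewrite det_anti; unfold z1; rewrite Dqd; ring).
      assert (det d z2 = - det a b) by (rewrite det_anti; unfold z2; rewrite Dqd; ring).
      assert (det z1 z2 = (s2 - s1) * det a b) by (unfold z1, z2; apply Dqq).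
      rewrite (det_anti z1 z) in Q. unfold s1, s2 in *. nra.
    + rewrite det_anti. lra.
Qed.

Lemma not_E x : support K mu x -> ~ E_set K x.
Proof.
  intros Hsup (a & b & Hab & Hs & s0 & Hs0 & Hx).
  change (forall s, 0 < s < 1 -> Sb (pp a b s)) in Hs. change (x = pp a b s0) in Hx.
  set (d := padd b (popp a)).
  assert (Hd0 : d <> pzero).
  { intros E. apply Hab. apply pt_eq.
    + pose proof (f_equal fst E) as Q. unfold d, padd, popp, pzero in Q; simpl in Q. lra.
    + pose proof (f_equal snd E) as Q. unfold d, padd, popp, pzero in Q; simpl in Q. lra. }
  pose proof (Nf_pos HK d Hd0) as HNd.
  assert (HD : det a b <> 0).
  { intros HD. apply (birk_det HK (pp a b s0) (pscale (/ N d) d)).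
    - apply Hs; auto.
    - apply (normalize_bd HK); auto.
    - apply (birk_scale HK); [apply seg_birk; auto|]. apply Rinv_neq_0_compat; lra.
    - replace (det (pp a b s0) (pscale (/ N d) d)) with (det a b / N d) by (unfold det, pp, padd, pscale, popp; simpl; field; lra). rewrite HD. unfold Rdiv; ring. }
  destruct (Rtotal_order (det a b) 0) as [Hn|[Hz|Hp]].
  - apply (seg_core b a (1 - s0) x Hsup).
    + auto.
    + intros s Hs1. replace (pp b a s) with (pp a b (1 - s)) by (apply pt_eq; unfold pp, padd, pscale; simpl; ring).
      apply Hs; lra.
    + lra.
    + rewrite Hx. apply pt_eq; unfold pp, padd, pscale; simpl; ring.
    + rewrite det_anti. lra.
  - contradiction.
  - apply (seg_core a b s0 x Hsup Hab Hs Hs0 Hx Hp).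
Qed.

End Seg.
Arguments no_support {K} HK {mu} HB.
Arguments N_pp_convex {K} HK.
Arguments seg_ge1 {K} HK.
Arguments seg_birk {K} HK.
Arguments seg_core {K} HK {mu} HB.
Arguments not_E {K} HK {mu} HB.


Lemma cv_le (u : nat -> R) l c : Un_cv u l -> (forall n, u n <= c) -> l <= c.
Proof.
  intros H Hc. destruct (Rle_or_lt l c) as [|Hlt]; auto. exfalso.
  destruct (H (l - c) ltac:(lra)) as (N & HN). specialize (HN N (le_n N)). specialize (Hc N).
  unfold Rdist in HN. apply Rabs_def2 in HN. lra.
Qed.

Lemma cv_eventually_neg (u : nat -> R) l : Un_cv u l -> l < 0 -> exists N, forall n, (n >= N)%nat -> u n < 0.
Proof.
  intros H Hl. destruct (H (- l) ltac:(lra)) as (N & HN). exists N. intros n Hn. specialize (HN n Hn).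
  unfold Rdist in HN. apply Rabs_def2 in HN. lra.
Qed.

Lemma pconv_of_pdist (z : nat -> pt) x :
  (forall eps, 0 < eps -> exists N, forall n, (n >= N)%nat -> pdist (z n) x < eps) -> pconv z x.
Proof.
  intros H. split; intros eps He; destruct (H eps He) as (N & HN); exists N; intros n Hn;
    unfold Rdist; eapply Rle_lt_trans; [apply pdist_ge1| | apply pdist_ge2|]; eauto.
Qed.

Lemma tseq_pos n : 0 < / (INR n + 2).
Proof. apply Rinv_0_lt_compat. pose proof (pos_INR n). lra. Qed.
Lemma tseq_le n : / (INR n + 2) <= 1/2.
Proof.
  pose proof (pos_INR n). unfold Rdiv. rewrite Rmult_1_l. apply Rinv_le_contravar; lra.
Qed.
Lemma tseq_small d : 0 < d -> exists N, forall n, (n >= N)%nat -> / (INR n + 2) < d.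
Proof.
  intros Hd. destruct (inv_small d Hd) as (N & HN). exists N. intros n Hn.
  eapply Rle_lt_trans; [|apply (HN n Hn)]. apply Rinv_le_contravar; [pose proof (pos_INR n); lra|lra].
Qed.

Section Auer.
Variable K : pset.
Hypothesis HK : sym_convex_body K.
Variable mu : pset -> R.
Hypothesis HB : B_measure K mu.
Local Notation N := (Nf K).
Local Notation Sb := (boundary K).

Lemma orient x y : Sb x -> Sb y -> birkhoff K x y -> exists y', Sb y' /\ birkhoff K x y' /\ 0 < det x y'.
Proof.
  intros Hx Hy Hb. pose proof (birk_det HK x y Hx Hy Hb) as Hd.
  destruct (Rtotal_order (det x y) 0) as [Hn|[Hz|Hp]].
  - exists (pscale (-1) y). split; [|split].
    + apply (bd_iff HK). rewrite (Nf_scale HK), ((proj1 (bd_iff HK _)) Hy). rewrite Rabs_left; lra.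
    + apply (birk_scale HK); auto; lra.
    + unfold det, pscale in *; simpl in *. lra.
  - contradiction.
  - exists y; auto.
Qed.

Lemma chain_exists x : Sb x -> exists y w, chain K x y w.
Proof.
  intros Hx. destruct (HB_supp HK x Hx) as (y0 & Hy0 & Hb0).
  destruct (orient x y0 Hx Hy0 Hb0) as (y & Hy & Hb & Hd).
  destruct (HB_supp HK y Hy) as (w0 & Hw0 & Hbw0).
  destruct (orient y w0 Hy Hw0 Hbw0) as (w & Hw & Hbw & Hdw).
  exists y, w. unfold chain; tauto.
Qed.

Lemma chain_det x y w : chain K x y w -> ~ auerbach K x -> det x w <> 0.
Proof.
  intros (Hx & Hy & Hw & Bxy & Byw & Dxy & Dyw) HnA Hd. apply HnA.
  split; auto. exists y. split; [auto|split; auto].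
  destruct (bd_pm HK x w Hx Hw Hd) as [-> | ->]; auto.
  assert (Hb := birk_scale HK y (popp x) (-1) Byw ltac:(lra)).
  replace (pscale (-1) (popp x)) with x in Hb by (apply pt_eq; unfold pscale, popp; simpl; ring).
  exact Hb.
Qed.

Lemma bd_K z : Sb z -> K z.
Proof. intros H. apply (Nf_K HK). apply (bd_iff HK) in H. lra. Qed.

Lemma lim_birk (a b : nat -> pt) A B : pconv a A -> pconv b B -> Sb A -> Sb B ->
  (forall n, birkhoff K (a n) (b n)) -> (forall n, Sb (a n)) -> birkhoff K A B.
Proof.
  intros Ha Hb HA HB' Hbk Hsa. apply (birk_iff HK). split; [apply (bd_nonzero HK); auto|split; [apply (bd_nonzero HK); auto|]].
  intros t. rewrite ((proj1 (bd_iff HK _)) HA).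
  apply (cv_ge (fun n => N (padd (a n) (pscale t (b n))))).
  - apply (cv_Nf K HK). apply pconv_comb; auto.
  - intros n. specialize (Hbk n). apply (birk_iff HK) in Hbk as (_ & _ & H).
    specialize (H t). rewrite ((proj1 (bd_iff HK _)) (Hsa n)) in H. auto.
Qed.

Lemma lim_bd (a : nat -> pt) A : pconv a A -> (forall n, Sb (a n)) -> Sb A.
Proof.
  intros Ha Hs. apply (bd_iff HK). pose proof (cv_Nf K HK _ _ Ha) as C.
  apply Rle_antisym.
  - apply (cv_le _ _ _ C). intros n. rewrite ((proj1 (bd_iff HK _)) (Hs n)). lra.
  - apply (cv_ge _ _ _ C). intros n. rewrite ((proj1 (bd_iff HK _)) (Hs n)). lra.
Qed.

Lemma lim_chain (z : nat -> pt) x (Y W : nat -> pt) : Sb x -> pconv z x -> (forall n, Sb (z n)) ->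
  (forall n, chain K (z n) (Y n) (W n)) ->
  exists (phi : nat -> nat) Yl Wl, (forall n, (n <= phi n)%nat) /\ chain K x Yl Wl /\
    pconv (fun n => W (phi n)) Wl /\ pconv (fun n => z (phi n)) x.
Proof.
  intros Hx Hz Hzs Hch.
  destruct (K_bound HK) as (M & HM0 & HM).
  destruct (extract2 Y M) as (phi1 & Yl & Hp1 & HY).
  { intros n. apply HM, bd_K. apply (Hch n). }
  destruct (extract2 (fun n => W (phi1 n)) M) as (phi2 & Wl & Hp2 & HW).
  { intros n. apply HM, bd_K. apply (Hch (phi1 n)). }
  set (phi := fun n => phi1 (phi2 n)).
  assert (Hp : forall n, (n <= phi n)%nat) by (intros n; unfold phi; specialize (Hp2 n); specialize (Hp1 (phi2 n)); lia).
  assert (HY' : pconv (fun n => Y (phi n)) Yl) by (apply (pconv_sub (fun n => Y (phi1 n)) Yl phi2 HY Hp2)).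
  assert (Hz' : pconv (fun n => z (phi n)) x) by (apply pconv_sub; auto).
  exists phi, Yl, Wl. split; [auto|split; [|split; auto]].
  assert (SY : Sb Yl) by (apply (lim_bd _ _ HY'); intros n; apply (Hch (phi n))).
  assert (SW : Sb Wl) by (apply (lim_bd _ _ HW); intros n; apply (Hch (phi1 (phi2 n)))).
  assert (B1 : birkhoff K x Yl).
  { apply (lim_birk _ _ _ _ Hz' HY' Hx SY); intros n; apply (Hch (phi n)). }
  assert (B2 : birkhoff K Yl Wl).
  { apply (lim_birk _ _ _ _ HY' HW SY SW); intros n; apply (Hch (phi n)). }
  assert (D1 : 0 <= det x Yl).
  { apply (cv_ge _ _ _ (cv_det _ _ _ _ Hz' HY')). intros n. left. apply (Hch (phi n)). }
  assert (D2 : 0 <= det Yl Wl).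
  { apply (cv_ge _ _ _ (cv_det _ _ _ _ HY' HW)). intros n. left. apply (Hch (phi n)). }
  pose proof (birk_det HK x Yl Hx SY B1). pose proof (birk_det HK Yl Wl SY SW B2).
  unfold chain. split; [auto|split; [auto|split; [auto|split; [auto|split; [auto|split; lra]]]]].
Qed.

Lemma both_signs x y w y' w' : support K mu x -> chain K x y w -> chain K x y' w' ->
  0 < det x w -> det x w' < 0 -> False.
Proof.
  intros Hsup C1 C2 D1 D2.
  pose proof (chain_L HK HB x y w C1 D1) as M1. pose proof (chain_R HK HB x y' w' C2 D2) as M2.
  apply (no_support HK HB x (fun z => 0 < det (popp w) z /\ 0 < det z (popp w'))
    (fun z => Arc K (popp w) x z \/ Arc K x (popp w') z) Hsup (open_cone _ _)).
  - rewrite det_opp_l, det_opp_r, (det_anti x w). lra.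
  - apply BS_mk; [apply borel_union2; apply (BS_Arc HK)|]. intros z [[]|[]]; auto.
  - apply Rle_antisym.
    + eapply Rle_trans; [apply (mu_sub HB); apply (BS_Arc HK)|]. lra.
    + apply (mu_nonneg HB). apply BS_mk; [apply borel_union2; apply (BS_Arc HK)|]. intros z [[]|[]]; auto.
  - intros z (H1 & H2) Hz. destruct (Rle_or_lt 0 (det z x)) as [H3|H3].
    + left. split; [auto|split; lra].
    + right. split; [auto|split; [rewrite det_anti; lra|lra]].
Qed.

Lemma supp_auer x : support K mu x -> auerbach K x.
Proof.
  intros Hsup. apply NNPP. intros HnA.
  assert (Hx : Sb x) by apply Hsup.
  assert (Hdet := fun y w C => chain_det x y w C HnA).
  destruct (chain_exists x Hx) as (y0 & w0 & C0).
  destruct (C0) as (_ & Hy0 & _ & _ & _ & Dxy0 & _).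
  destruct (Rtotal_order (det x w0) 0) as [Hn|[Hz|Hp]].
  -
    assert (Hall : forall y w, chain K x y w -> det x w < 0).
    { intros y w C. destruct (Rtotal_order (det x w) 0) as [|[|]]; auto.
      - exfalso; apply (Hdet y w C); auto.
      - exfalso; apply (both_signs x y w y0 w0 Hsup C C0); auto. }
    set (u := popp y0).
    assert (Hu : Sb u) by (apply (bd_opp HK); auto).
    assert (Dux : 0 < det u x) by (unfold u; rewrite det_opp_l, (det_anti x y0); lra).
    set (z := fun n => garc K u x (1 - / (INR n + 2))).
    assert (Ht : forall n, 0 <= 1 - / (INR n + 2) <= 1) by (intros n; pose proof (tseq_pos n); pose proof (tseq_le n); lra).
    assert (Hzs : forall n, Sb (z n)) by (intros n; apply (garc_bd HK); auto).
    assert (Hzx : forall n, 0 < det (z n) x).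
    { intros n. unfold z. rewrite (det_garc2 HK u x Dux _ (Ht n)).
      apply Rdiv_lt_0_compat; [|apply (Np_pos HK); auto]. pose proof (tseq_pos n). nra. }
    assert (Hzc : pconv z x).
    { apply pconv_of_pdist. intros eps He.
      destruct (garc_cont HK u x Dux 1 ltac:(lra) eps He) as (d & Hd & Hc).
      destruct (tseq_small d Hd) as (N0 & HN0). exists N0. intros n Hnn.
      rewrite <- (garc1 HK u x Hx) at 1. apply Hc; auto.
      replace (1 - / (INR n + 2) - 1) with (- / (INR n + 2)) by ring. rewrite Rabs_Ropp.
      rewrite Rabs_right by (left; apply tseq_pos). auto. }
    assert (Hch : forall n, exists p : pt * pt, chain K (z n) (fst p) (snd p)).
    { intros n. destruct (chain_exists (z n) (Hzs n)) as (y & w & C). exists (y, w). auto. }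
    destruct (my_choice _ Hch) as (f & Hf).
    set (Y := fun n => fst (f n)). set (W := fun n => snd (f n)).
    assert (Hclaim : forall n, 0 <= det (z n) (W n) \/ 0 <= det x (W n)).
    { intros n. destruct (Rle_or_lt 0 (det (z n) (W n))) as [|H1]; [left; auto|].
      destruct (Rle_or_lt 0 (det x (W n))) as [|H2]; [right; auto|]. exfalso.
      pose proof (chain_R HK HB (z n) (Y n) (W n) (Hf n) H1) as M.
      apply (no_support HK HB x (fun q => 0 < det (z n) q /\ 0 < det q (popp (W n))) (Arc K (z n) (popp (W n))) Hsup (open_cone _ _)).
      - split; auto. rewrite det_opp_r. lra.
      - apply (BS_Arc HK).
      - exact M.
      - intros q (Q1 & Q2) Hq. split; [auto|split; lra]. }
    destruct (lim_chain z x Y W Hx Hzc Hzs Hf) as (phi & Yl & Wl & Hphi & Cl & HW & Hz').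
    pose proof (Hall _ _ Cl) as HWl.
    destruct (cv_eventually_neg _ _ (cv_det _ _ _ _ Hz' HW) HWl) as (N1 & HN1).
    destruct (cv_eventually_neg _ _ (cv_det _ _ _ _ (pconv_const x) HW) HWl) as (N2 & HN2).
    specialize (HN1 (max N1 N2) ltac:(lia)). specialize (HN2 (max N1 N2) ltac:(lia)).
    destruct (Hclaim (phi (max N1 N2))); simpl in *; lra.
  - exfalso; apply (Hdet y0 w0 C0); auto.
  -
    assert (Hall : forall y w, chain K x y w -> 0 < det x w).
    { intros y w C. destruct (Rtotal_order (det x w) 0) as [|[|]]; auto.
      - exfalso; apply (both_signs x y0 w0 y w Hsup C0 C); auto.
      - exfalso; apply (Hdet y w C); auto. }
    set (z := fun n => garc K x y0 (/ (INR n + 2))).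
    assert (Ht : forall n, 0 <= / (INR n + 2) <= 1) by (intros n; pose proof (tseq_pos n); pose proof (tseq_le n); lra).
    assert (Hzs : forall n, Sb (z n)) by (intros n; apply (garc_bd HK); auto).
    assert (Hzx : forall n, 0 < det x (z n)).
    { intros n. unfold z. rewrite (det_garc1 HK x y0 Dxy0 _ (Ht n)).
      apply Rdiv_lt_0_compat; [|apply (Np_pos HK); auto]. pose proof (tseq_pos n). nra. }
    assert (Hzc : pconv z x).
    { apply pconv_of_pdist. intros eps He.
      destruct (garc_cont HK x y0 Dxy0 0 ltac:(lra) eps He) as (d & Hd & Hc).
      destruct (tseq_small d Hd) as (N0 & HN0). exists N0. intros n Hnn.
      rewrite <- (garc0 HK x y0 Hx) at 1. apply Hc; auto.
      rewrite Rminus_0_r, Rabs_right by (left; apply tseq_pos). auto. }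
    assert (Hch : forall n, exists p : pt * pt, chain K (z n) (fst p) (snd p)).
    { intros n. destruct (chain_exists (z n) (Hzs n)) as (y & w & C). exists (y, w). auto. }
    destruct (my_choice _ Hch) as (f & Hf).
    set (Y := fun n => fst (f n)). set (W := fun n => snd (f n)).
    assert (Hclaim : forall n, det (z n) (W n) <= 0 \/ det x (W n) <= 0).
    { intros n. destruct (Rle_or_lt (det (z n) (W n)) 0) as [|H1]; [left; auto|].
      destruct (Rle_or_lt (det x (W n)) 0) as [|H2]; [right; auto|]. exfalso.
      pose proof (chain_L HK HB (z n) (Y n) (W n) (Hf n) H1) as M.
      apply (no_support HK HB x (fun q => 0 < det (popp (W n)) q /\ 0 < det q (z n)) (Arc K (popp (W n)) (z n)) Hsup (open_cone _ _)).
      - split; auto. rewrite det_opp_l, (det_anti x (W n)). lra.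
      - apply (BS_Arc HK).
      - exact M.
      - intros q (Q1 & Q2) Hq. split; [auto|split; lra]. }
    destruct (lim_chain z x Y W Hx Hzc Hzs Hf) as (phi & Yl & Wl & Hphi & Cl & HW & Hz').
    pose proof (Hall _ _ Cl) as HWl.
    destruct (cv_eventually_pos _ _ (cv_det _ _ _ _ Hz' HW) HWl) as (N1 & HN1).
    destruct (cv_eventually_pos _ _ (cv_det _ _ _ _ (pconv_const x) HW) HWl) as (N2 & HN2).
    specialize (HN1 (max N1 N2) ltac:(lia)). specialize (HN2 (max N1 N2) ltac:(lia)).
    destruct (Hclaim (phi (max N1 N2))); simpl in *; lra.
Qed.

End Auer.

Theorem lemma2p1 (K : pset) (mu : pset -> R) :
  sym_convex_body K -> B_measure K mu ->
  forall x, support K mu x -> auerbach K x /\ ~ E_set K x.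
Proof.
  intros HK HB x Hx. split.
  - apply (supp_auer K HK mu HB x Hx).
  - apply (not_E HK HB x Hx).
Qed.
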